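(* Let $R=\bigoplus_{\alpha\in\Gamma}R_{\alpha}$ be a graded integral domain and let $\star$ be a semistar operation on $R$ such that $R^{\star}\subsetneq R_H$. Then (1) $N(\star)=R[X]\setminus\bigcup\{Q[X]: Q\in h\text{-}\mathrm{QMax}^{\widetilde{\star}}(R)\}$; (2) $\mathrm{Max}(\mathrm{NA}(R,\star))=\{Q\,\mathrm{NA}(R,\star): Q\in h\text{-}\mathrm{QMax}^{\widetilde{\star}}(R)\}$; (3) $\mathrm{NA}(R,\star)=\bigcap\{R_Q(X): Q\in h\text{-}\mathrm{QMax}^{\widetilde{\star}}(R)\}$.
   Context: $\Gamma$ is a commutative cancellative monoid (written additively) whose quotient group $\langle\Gamma\rangle$ is torsion-free. A graded integral domain $R=\bigoplus_{\alpha\in\Gamma}R_\alpha$ is an integral domain that is the direct sum of additive subgroups $R_\alpha$ with $R_\alpha R_\beta\subseteq R_{\alpha+\beta}$. $K$ is its quotient field, $H$ the set of nonzero homogeneous elements of $R$, and $R_H$ the homogeneous quotient field. An ideal $I$ of $R$ is homogeneous if $I=\bigoplus_\alpha(I\cap R_\alpha)$. For $a\in R_H$, $C(a)$ is the $R$-submodule of $R_H$ generated by the homogeneous components of $a$; for $f=f_0+\cdots+f_nX^n\in R[X]$, $A_f:=\sum_i C(f_i)$. A semistar operation on $R$ is a map $\star$ from the set $\overline{\mathcal F}(R)$ of nonzero $R$-submodules of $K$ to itself such that for all $0\ne x\in K$ and $E,F$: $(xE)^\star=xE^\star$; $E\subseteq F\Rightarrow E^\star\subseteq F^\star$; $E\subseteq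 E^\star$; $(E^\star)^\star=E^\star$. $\widetilde\star$ is the semistar operation $E^{\widetilde\star}=\{x\in K: xJ\subseteq E$ for some finitely generated ideal $J\subseteq R$ with $J^\star=R^\star\}$. A nonzero ideal $I$ of $R$ is a quasi-$\star$-ideal if $I^\star\cap R=I$; $h\text{-}\mathrm{QMax}^{\star}(R)$ denotes the set of ideals of $R$ that are maximal in the set of all proper homogeneous quasi-$\star$-ideals of $R$. $N(\star):=\{f\in R[X]: f\ne0,\ A_f^\star=R^\star\}$ and $\mathrm{NA}(R,\star):=R[X]_{N(\star)}$. For a domain $D$, $D(X):=D[X]_S$ where $S$ is the set of polynomials whose coefficients generate the unit ideal of $D$. $\mathrm{Max}$ denotes the set of maximal ideals. *)

(* Defs.v *)
From HB Require Import structures.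
From mathcomp Require Import all_boot all_order all_algebra.
From mathcomp Require Import fraction.

Set Implicit Arguments.
Unset Strict Implicit.
Unset Printing Implicit Defensive.

Import GRing.Theory.
Local Open Scope ring_scope.

Definition psubset (T : Type) (A B : T -> Prop) := forall x, A x -> B x.

(* Gamma is a submonoid of the torsion-free abelian group G; the group
   generated by Gamma inside G is then the (torsion-free) quotient group. *)
Definition torsion_free (G : zmodType) :=
  forall (x : G) (n : nat), (0 < n)%N -> x *+ n = 0 -> x = 0.

Definition submonoid (G : zmodType) (Gam : G -> Prop) :=
  Gam 0 /\ (forall a b, Gam a -> Gam b -> Gam (a + b)).

Definition is_subring (L : comPzRingType) (A : L -> Prop) :=
  [/\ A 1, (forall x y, A x -> A y -> A (x - y)) & (forall x y, A x -> A y -> A (x * y))].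

Definition is_submod (L : comPzRingType) (A E : L -> Prop) :=
  [/\ E 0, (forall x y, E x -> E y -> E (x + y)) & (forall r x, A r -> E x -> E (r * x))].

Definition nz_submod (L : comPzRingType) (A E : L -> Prop) :=
  is_submod A E /\ exists x, E x /\ x != 0.

Definition is_ideal (L : comPzRingType) (A I : L -> Prop) := psubset I A /\ is_submod A I.

Definition is_maximal_ideal (L : comPzRingType) (A M : L -> Prop) :=
  [/\ is_ideal A M, ~ M 1 &
      forall I, is_ideal A I -> ~ I 1 -> psubset M I -> I = M].

Definition span (L : comPzRingType) (A S : L -> Prop) : L -> Prop :=
  fun x => exists s : seq (L * L),
    (forall p, p \in s -> A p.1 /\ S p.2) /\ x = \sum_(p <- s) p.1 * p.2.

Definition is_fg_ideal (L : comPzRingType) (A J : L -> Prop) :=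
  exists l : seq L, (forall y, y \in l -> A y) /\ J = span A (fun y => y \in l).

Definition scale_set (L : comPzRingType) (x : L) (E : L -> Prop) : L -> Prop :=
  fun y => exists z, E z /\ y = x * z.

(* R is a subring of the field K, K is the quotient field of R,
   Rg a is the homogeneous component R_a (a : G; R_a = 0 for a outside Gamma). *)
Definition is_decomp (G : zmodType) (K : fieldType) (Rg : G -> K -> Prop)
  (r : K) (s : seq (G * K)) :=
  [/\ uniq (map fst s), (forall p, p \in s -> Rg p.1 p.2) & r = \sum_(p <- s) p.2].

Record graded_domain (G : zmodType) (K : fieldType) (Gam : G -> Prop)
  (R : K -> Prop) (Rg : G -> K -> Prop) : Prop := {
  gd_torsion_free : torsion_free G;
  gd_submonoid : submonoid Gam;
  gd_subring : is_subring R;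
  gd_quotient_field : forall x : K, exists a b, [/\ R a, R b, b != 0 & x = a / b];
  gd_comp0 : forall a, Rg a 0;
  gd_compB : forall a x y, Rg a x -> Rg a y -> Rg a (x - y);
  gd_compR : forall a x, Rg a x -> R x;
  gd_comp_out : forall a x, ~ Gam a -> Rg a x -> x = 0;
  gd_compM : forall a b x y, Rg a x -> Rg b y -> Rg (a + b) (x * y);
  gd_sum : forall r, R r -> exists s, is_decomp Rg r s;
  gd_direct : forall s, is_decomp Rg 0 s -> forall p, p \in s -> p.2 = 0
}.

Definition homogeneous (G : zmodType) (K : fieldType) (Rg : G -> K -> Prop) (x : K) :=
  exists a, Rg a x.

Definition Hset (G : zmodType) (K : fieldType) (Rg : G -> K -> Prop) : K -> Prop :=
  fun x => x != 0 /\ homogeneous Rg x.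

Definition RH (G : zmodType) (K : fieldType) (R : K -> Prop) (Rg : G -> K -> Prop) : K -> Prop :=
  fun x => exists a h, [/\ R a, Hset Rg h & x = a / h].

Definition components (G : zmodType) (K : fieldType) (Rg : G -> K -> Prop) (r : K) : K -> Prop :=
  fun x => exists s, is_decomp Rg r s /\ exists a, (a, x) \in s.

Definition homogeneous_ideal (G : zmodType) (K : fieldType) (R : K -> Prop)
  (Rg : G -> K -> Prop) (I : K -> Prop) :=
  is_ideal R I /\
  forall r, I r -> exists s, is_decomp Rg r s /\ forall p, p \in s -> I p.2.

Record semistar (K : fieldType) (R : K -> Prop) (star : (K -> Prop) -> (K -> Prop)) : Prop := {
  ss_dom : forall E, nz_submod R E -> nz_submod R (star E);
  ss_scale : forall x E, x != 0 -> nz_submod R E -> star (scale_set x E) = scale_set x (star E);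
  ss_mono : forall E F, nz_submod R E -> nz_submod R F -> psubset E F -> psubset (star E) (star F);
  ss_ext : forall E, nz_submod R E -> psubset E (star E);
  ss_idem : forall E, nz_submod R E -> star (star E) = star E
}.

Definition stilde (K : fieldType) (R : K -> Prop) (star : (K -> Prop) -> (K -> Prop))
  (E : K -> Prop) : K -> Prop :=
  fun x => exists J, [/\ is_fg_ideal R J, (exists y, J y /\ y != 0), star J = star R &
                         forall j, J j -> E (x * j)].

Definition quasi_ideal (K : fieldType) (R : K -> Prop) (star : (K -> Prop) -> (K -> Prop))
  (I : K -> Prop) :=
  [/\ is_ideal R I, (exists x, I x /\ x != 0) & (fun x => star I x /\ R x) = I].

Definition proper_hquasi (G : zmodType) (K : fieldType) (R : K -> Prop) (Rg : G -> K -> Prop)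
  (star : (K -> Prop) -> (K -> Prop)) (I : K -> Prop) :=
  [/\ quasi_ideal R star I, homogeneous_ideal R Rg I & ~ I 1].

Definition hQMax (G : zmodType) (K : fieldType) (R : K -> Prop) (Rg : G -> K -> Prop)
  (star : (K -> Prop) -> (K -> Prop)) (Q : K -> Prop) :=
  proper_hquasi R Rg star Q /\
  forall I, proper_hquasi R Rg star I -> psubset Q I -> I = Q.

(* D[X] as the polynomials of K[X] with coefficients in D *)
Definition polys (K : fieldType) (D : K -> Prop) : {poly K} -> Prop :=
  fun f => forall i, D f`_i.

Definition Af (G : zmodType) (K : fieldType) (R : K -> Prop) (Rg : G -> K -> Prop)
  (f : {poly K}) : K -> Prop :=
  span R (fun x => exists i, components Rg f`_i x).

Definition Nstar (G : zmodType) (K : fieldType) (R : K -> Prop) (Rg : G -> K -> Prop)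
  (star : (K -> Prop) -> (K -> Prop)) : {poly K} -> Prop :=
  fun f => [/\ polys R f, f != 0 & star (Af R Rg f) = star R].

Definition toFX (K : fieldType) (f : {poly K}) : {fraction {poly K}} := tofrac f.

Definition NA (G : zmodType) (K : fieldType) (R : K -> Prop) (Rg : G -> K -> Prop)
  (star : (K -> Prop) -> (K -> Prop)) : {fraction {poly K}} -> Prop :=
  fun z => exists f g, [/\ polys R f, Nstar R Rg star g & z = toFX f / toFX g].

Definition ext_ideal (K : fieldType) (A : {fraction {poly K}} -> Prop) (Q : K -> Prop) :
  {fraction {poly K}} -> Prop :=
  span A (fun z => exists q, Q q /\ z = toFX q%:P).

Definition loc (K : fieldType) (R Q : K -> Prop) : K -> Prop :=
  fun x => exists a s, [/\ R a, R s, ~ Q s & x = a / s].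

(* D(X) = D[X]_S, S = polynomials whose coefficients generate D *)
Definition nagata (K : fieldType) (D : K -> Prop) : {fraction {poly K}} -> Prop :=
  fun z => exists f g, [/\ polys D f, polys D g,
                           span D (fun c => exists i, c = g`_i) 1 &
                           z = toFX f / toFX g].

(* Main.v *)
Require Import Defs.
From HB Require Import structures.
From mathcomp Require Import all_boot all_order all_algebra.
From mathcomp Require Import fraction.
From mathcomp Require Import boolp classical_sets.
From mathcomp Require Import ring lra zify.
Require Import Defs.
Set Implicit Arguments.
Unset Strict Implicit.
Unset Printing Implicit Defensive.
Import Order.TTheory GRing.Theory Num.Theory.
Local Open Scope ring_scope.


Definition torsion_free (G : zmodType) :=
  forall (x : G) (n : nat), (0 < n)%N -> x *+ n = 0 -> x = 0.

Section Avoid.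
Variable n : nat.

Lemma le_sum_seq (T : eqType) (f : T -> rat) (l : seq T) s0 :
  s0 \in l -> `|f s0| <= \sum_(s <- l) `|f s|.
Proof.
elim: l => // a l IH; rewrite in_cons big_cons => /orP[/eqP->|H].
  by rewrite lerDl sumr_ge0.
by rewrite (le_trans (IH H)) // lerDr.
Qed.

Lemma avoid_rows (rs : seq 'rV[rat]_n) :
  (forall r, r \in rs -> r != 0) ->
  exists t : 'cV[rat]_n, forall r, r \in rs -> (r *m t) 0 0 != 0.
Proof.
elim: rs => [|r rs IH] Hnz; first by exists 0.
have [t Ht] : exists t : 'cV[rat]_n, forall r, r \in rs -> (r *m t) 0 0 != 0.
  by apply: IH => r' Hr'; apply: Hnz; rewrite in_cons Hr' orbT.
have /negP Hr0 : r != 0 by apply: Hnz; rewrite mem_head.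
have [j Hj] : exists j, r 0 j != 0.
  case: (pickP (fun k => r 0 k != 0)) => [k Hk|H]; first by exists k.
  exfalso; apply: Hr0; apply/eqP/matrixP => i k.
  by rewrite mxE (ord1 i); have := H k => /negbFE/eqP ->.
set t' : 'cV[rat]_n := delta_mx j 0.
pose a (s : 'rV[rat]_n) := (s *m t) 0 0.
pose b (s : 'rV[rat]_n) := (s *m t') 0 0.
have bE s : b s = s 0 j.
  rewrite /b /t' mxE (bigD1 j) //= big1 ?addr0; first by rewrite mxE !eqxx mulr1.
  by move=> k /negbTE Hk; rewrite mxE Hk mulr0.
pose lam := 1 + \sum_(s <- r :: rs) `|a s / b s|.
have lam_gt : forall s, s \in r :: rs -> `|a s / b s| < lam.
  move=> s Hs; rewrite /lam addrC ltr_pwDr ?ltr01 //.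
  exact: (le_sum_seq (fun s => a s / b s)).
have key : forall s, s \in r :: rs -> (a s != 0) || (b s != 0) -> a s + lam * b s != 0.
  move=> s Hs Hab; apply/eqP => E.
  have [b0|bn0] := eqVneq (b s) 0.
    by move: Hab E; rewrite b0 mulr0 addr0 eqxx orbF => /eqP.
  have : lam = - (a s / b s).
    have E' : lam * b s = - a s by apply/eqP; rewrite -addr_eq0 addrC E.
    by apply: (mulIf bn0); rewrite E' mulNr -mulrA mulVf // mulr1.
  move=> El; have := lam_gt s Hs.
  have lam_pos : 0 < lam by rewrite /lam ltr_pwDl ?ltr01 // sumr_ge0.
  by rewrite -normrN -El gtr0_norm // ltxx.
exists (t + lam *: t') => s Hs.
have -> : (s *m (t + lam *: t')) 0 0 = a s + lam * b s.
  rewrite mulmxDr -scalemxAr /a /b; rewrite [in LHS]mxE.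
  by rewrite [X in _ + X]mxE.
apply: key => //.
move: Hs; rewrite in_cons => /orP[/eqP->|Hs]; first by rewrite bE Hj orbT.
by rewrite Ht.
Qed.
End Avoid.


Section Sep.
Variables (G : zmodType) (n : nat) (g : 'I_n -> G).
Hypothesis tfG : torsion_free G.

Definition phi (v : 'rV[int]_n) : G := \sum_i g i *~ v 0 i.
Definition ev (i : 'I_n) : 'rV[int]_n := delta_mx 0 i.
Definition toQ (v : 'rV[int]_n) : 'rV[rat]_n := \matrix_(a, b) (v a b)%:~R.

Lemma phiD v w : phi (v + w) = phi v + phi w.
Proof. by rewrite /phi -big_split /=; apply: eq_bigr => i _; rewrite mxE mulrzDr. Qed.
Lemma phiN v : phi (- v) = - phi v.
Proof. by rewrite /phi -sumrN; apply: eq_bigr => i _; rewrite mxE mulrNz. Qed.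
Lemma phiB v w : phi (v - w) = phi v - phi w.
Proof. by rewrite phiD phiN. Qed.
Lemma phi0 : phi 0 = 0.
Proof. by rewrite /phi big1 // => i _; rewrite mxE mulr0z. Qed.
Lemma phiZ z v : phi (z *: v) = phi v *~ z.
Proof. by rewrite /phi mulrz_suml; apply: eq_bigr => i _; rewrite mxE mulrC mulrzA. Qed.
Lemma phi_sum (I : finType) (F : I -> 'rV[int]_n) : phi (\sum_i F i) = \sum_i phi (F i).
Proof. exact: (big_morph phi phiD phi0). Qed.
Lemma phi_ev i : phi (ev i) = g i.
Proof.
rewrite /phi (bigD1 i) //= big1 ?addr0; first by rewrite mxE !eqxx.
by move=> k /negbTE Hk; rewrite mxE Hk andbF mulr0z.
Qed.

Lemma toQD v w : toQ (v + w) = toQ v + toQ w.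
Proof. by apply/matrixP => a b; rewrite !mxE rmorphD. Qed.
Lemma toQB v w : toQ (v - w) = toQ v - toQ w.
Proof. by apply/matrixP => a b; rewrite !mxE rmorphB. Qed.
Lemma toQZ z v : toQ (z *: v) = z%:~R *: toQ v.
Proof. by apply/matrixP => a b; rewrite !mxE rmorphM. Qed.
Lemma toQ_sum (I : finType) (F : I -> 'rV[int]_n) : toQ (\sum_i F i) = \sum_i toQ (F i).
Proof. by apply/matrixP => a b; rewrite mxE !summxE rmorph_sum; apply: eq_bigr => i _; rewrite mxE. Qed.
Lemma toQ_inj : injective toQ.
Proof. by move=> v w E; apply/matrixP => a b; have := congr1 (fun M : 'rV[rat]_n => M a b) E; rewrite !mxE => /intr_inj. Qed.

Definition I4 := ('I_n * 'I_n * 'I_n * 'I_n)%type.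
Definition dq (q : I4) := ev q.1.1.1 + ev q.1.1.2 - ev q.1.2 - ev q.2.
Definition relq (q : I4) := g q.1.1.1 + g q.1.1.2 == g q.1.2 + g q.2.
Definition rq (q : I4) := if relq q then dq q else 0.
Definition Mx : 'M[rat]_(#|{: I4}|, n) := \matrix_(k < #|{: I4}|) toQ (rq (enum_val k)).

Lemma phi_rq q : phi (rq q) = 0.
Proof.
rewrite /rq; case: ifP => [/eqP H|_]; last exact: phi0.
by rewrite /dq !phiB phiD !phi_ev H -addrA -opprD subrr.
Qed.

Lemma saturation i j : (toQ (ev i - ev j) <= Mx)%MS -> g i = g j.
Proof.
move=> /submxP [D HD]; move: HD; rewrite mulmx_sum_row => HD.
pose den k := denq (D 0 k).
pose Dn := \prod_k den k.
pose z k := (\prod_(k' | k' != k) den k') * numq (D 0 k).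
have Hz k : (Dn%:~R : rat) * D 0 k = (z k)%:~R.
  rewrite /Dn /z (bigD1 k) //= !rmorphM /= numqE /den; ring.
have HDn : 0 < Dn by apply: prodr_gt0 => k _; exact: denq_gt0.
have E : toQ (Dn *: (ev i - ev j)) = toQ (\sum_k z k *: rq (enum_val k)).
  rewrite toQZ HD toQ_sum scaler_sumr; apply: eq_bigr => k _.
  by rewrite rowK scalerA Hz toQZ.
have := congr1 phi (toQ_inj E).
rewrite phiZ phi_sum big1; last by move=> k _; rewrite phiZ phi_rq mul0rz.
rewrite phiB !phi_ev -(gtz0_abs HDn) -pmulrn => /(tfG _); rewrite absz_gt0 gt_eqF //.
by move=> /(_ isT) /eqP; rewrite subr_eq0 => /eqP.
Qed.

Lemma exists_psi : exists psi : 'I_n -> rat,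
  (forall i j k l, g i + g j = g k + g l -> psi i + psi j = psi k + psi l) /\
  (forall i j, g i != g j -> psi i != psi j).
Proof.
pose C := cokermx Mx.
pose rs := [seq toQ (ev p.1 - ev p.2) *m C | p <- enum {: 'I_n * 'I_n} & g p.1 != g p.2].
have [t Ht] : exists t : 'cV[rat]_n, forall r, r \in rs -> (r *m t) 0 0 != 0.
  apply: avoid_rows => r /mapP [p]; rewrite mem_filter => /andP [Hp _] ->.
  apply/negP; rewrite -submxE => /saturation E; by rewrite E eqxx in Hp.
pose f (M : 'rV[rat]_n) := (M *m C *m t) 0 0.
have fD x y : f (x + y) = f x + f y by rewrite /f !mulmxDl [in LHS]mxE.
have fB x y : f (x - y) = f x - f y by rewrite /f !mulmxBl [in LHS]mxE [X in _ + X]mxE.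
exists (fun i => f (toQ (ev i))); split.
  move=> i j k l H.
  pose q : I4 := (i, j, k, l).
  have Hq : relq q by apply/eqP.
  have : (toQ (dq q) <= Mx)%MS.
    by have := row_sub (enum_rank q) Mx; rewrite rowK enum_rankK /rq Hq.
  rewrite submxE => /eqP H0.
  have : f (toQ (dq q)) = 0 by rewrite /f H0 mul0mx mxE.
  rewrite /dq /= !toQB toQD !fB fD => /eqP; rewrite subr_eq0 subr_eq => /eqP ->.
  by rewrite addrC.
move=> i j Hij.
have : f (toQ (ev i - ev j)) != 0.
  apply: Ht; apply/mapP; exists (i, j) => //; by rewrite mem_filter Hij mem_enum.
by rewrite toQB fB subr_eq0.
Qed.

End Sep.

Lemma seq_max (T : eqType) (f : T -> rat) (s : seq T) :
  s != [::] -> exists2 x, x \in s & forall y, y \in s -> f y <= f x.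
Proof.
elim: s => // a s IH _.
have [->|sn] := eqVneq s [::].
  by exists a; rewrite ?mem_head // => y; rewrite inE => /eqP ->.
have [x Hx Hm] := IH sn.
have [le|lt] := leP (f a) (f x).
  exists x; first by rewrite in_cons Hx orbT.
  by move=> y; rewrite in_cons => /orP [/eqP ->|]; last exact: Hm.
exists a; first exact: mem_head.
move=> y; rewrite in_cons => /orP [/eqP ->|Hy] //.
by apply: le_trans (Hm y Hy) (ltW lt).
Qed.

Lemma upp (G : zmodType) : torsion_free G -> forall A B : seq G,
  A != [::] -> B != [::] ->
  exists a b, [/\ a \in A, b \in B & forall a' b', a' \in A -> b' \in B ->
     a' + b' = a + b -> a' = a /\ b' = b].
Proof.
move=> tfG A B nA nB.
pose l := A ++ B; pose n := size l.
pose g (i : 'I_n) := nth 0 l i.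
have [psi [Hadd Hinj]] := exists_psi g tfG.
pose Psi x := if insub (index x l) is Some i then psi i else 0.
have PsiP x : x \in l -> exists i, g i = x /\ Psi x = psi i.
  move=> xl; rewrite /Psi; case: insubP => [i _ Ei|]; last by rewrite index_mem xl.
  by exists i; split => //; rewrite /g Ei nth_index.
have Ain x : x \in A -> x \in l by rewrite mem_cat => ->.
have Bin x : x \in B -> x \in l by rewrite mem_cat orbC => ->.
have [a Ha Hma] := seq_max Psi nA.
have [b Hb Hmb] := seq_max Psi nB.
exists a, b; split => // a' b' Ha' Hb' E.
have [ia [gia Pa]] := PsiP a (Ain a Ha).
have [ib [gib Pb]] := PsiP b (Bin b Hb).
have [ia' [gia' Pa']] := PsiP a' (Ain a' Ha').
have [ib' [gib' Pb']] := PsiP b' (Bin b' Hb').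
have E' : psi ia' + psi ib' = psi ia + psi ib by apply: Hadd; rewrite gia gib gia' gib'.
have l1 : psi ia' <= psi ia by rewrite -Pa -Pa'; exact: Hma.
have l2 : psi ib' <= psi ib by rewrite -Pb -Pb'; exact: Hmb.
have e1 : psi ia' = psi ia by apply/eqP; rewrite eq_le l1 /=; lra.
have e2 : psi ib' = psi ib by move: E'; rewrite e1 => /addrI.
split.
  rewrite -gia -gia'; apply/eqP; apply/negP => /negP H; have := Hinj _ _ H.
  by rewrite e1 eqxx.
rewrite -gib -gib'; apply/eqP; apply/negP => /negP H; have := Hinj _ _ H.
by rewrite e2 eqxx.
Qed.


Section Graded.
Variables (G : zmodType) (K : fieldType) (Gam : G -> Prop) (R : K -> Prop) (Rg : G -> K -> Prop).
Hypothesis gd : graded_domain Gam R Rg.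

Lemma Rg0 a : Rg a 0. Proof. exact: (gd_comp0 gd a). Qed.
Lemma RgN a x : Rg a x -> Rg a (- x).
Proof. by move=> H; rewrite -sub0r; apply: gd_compB gd _ _ _ (Rg0 a) H. Qed.
Lemma RgD a x y : Rg a x -> Rg a y -> Rg a (x + y).
Proof. by move=> Hx Hy; rewrite -[y]opprK; apply: gd_compB gd _ _ _ Hx (RgN Hy). Qed.
Lemma Rg_sum (a : G) (T : eqType) (l : seq T) (P : pred T) (F : T -> K) :
  (forall x, x \in l -> P x -> Rg a (F x)) -> Rg a (\sum_(x <- l | P x) F x).
Proof.
elim: l => [|y l IH] H; first by rewrite big_nil; exact: Rg0.
rewrite big_cons; case: ifP => Py.
  by apply: RgD; [apply: H; rewrite ?mem_head | apply: IH => x Hx; apply: H; rewrite in_cons Hx orbT].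
by apply: IH => x Hx; apply: H; rewrite in_cons Hx orbT.
Qed.

Lemma R1 : R 1. Proof. by case: (gd_subring gd). Qed.
Lemma RB x y : R x -> R y -> R (x - y). Proof. by case: (gd_subring gd) => _ H _; apply: H. Qed.
Lemma RM x y : R x -> R y -> R (x * y). Proof. by case: (gd_subring gd) => _ _ H; apply: H. Qed.
Lemma R0 : R 0. Proof. by rewrite -(subrr 1); apply: RB; apply: R1. Qed.
Lemma RN x : R x -> R (- x). Proof. by move=> H; rewrite -sub0r; apply: RB => //; exact: R0. Qed.
Lemma RD x y : R x -> R y -> R (x + y).
Proof. by move=> Hx Hy; rewrite -[y]opprK; apply: RB => //; exact: RN. Qed.
Lemma R_sum (T : eqType) (l : seq T) (P : pred T) (F : T -> K) :
  (forall x, x \in l -> P x -> R (F x)) -> R (\sum_(x <- l | P x) F x).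
Proof.
elim: l => [|y l IH] H; first by rewrite big_nil; exact: R0.
rewrite big_cons; case: ifP => Py.
  by apply: RD; [apply: H; rewrite ?mem_head | apply: IH => x Hx; apply: H; rewrite in_cons Hx orbT].
by apply: IH => x Hx; apply: H; rewrite in_cons Hx orbT.
Qed.

Definition coef (s : seq (G * K)) a := \sum_(p <- s | p.1 == a) p.2.
Definition dec (l : seq (G * K)) := [seq (a, coef l a) | a <- undup (map fst l)].

Lemma sum_if_uniq (U : seq G) x (v : K) : uniq U -> x \in U ->
  \sum_(a <- U) (if x == a then v else 0) = v.
Proof.
elim: U => // b U IH /andP [nb uU]; rewrite in_cons big_cons => /orP [/eqP Exb|xU].
  subst x; rewrite eqxx big1_seq ?addr0 // => a /andP [_ aU]; case: eqP => // E.
  by rewrite E aU in nb.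
case: eqP => E; first by rewrite -E xU in nb.
by rewrite add0r IH.
Qed.

Lemma sum_dec l : \sum_(p <- dec l) p.2 = \sum_(p <- l) p.2.
Proof.
rewrite big_map /coef.
under eq_bigr => a _ do rewrite big_mkcond.
rewrite exchange_big /=; apply: eq_big_seq => p Hp.
rewrite (@sum_if_uniq (undup (map fst l)) p.1 p.2) ?undup_uniq //.
by rewrite mem_undup; apply/mapP; exists p.
Qed.

Lemma uniq_dec l : uniq (map fst (dec l)).
Proof. by rewrite /dec -map_comp map_id_in ?undup_uniq. Qed.

Lemma Rg_coef l a : (forall p, p \in l -> Rg p.1 p.2) -> Rg a (coef l a).
Proof. by move=> H; apply: Rg_sum => p Hp /eqP <-; exact: H. Qed.

Lemma dec_ok l : (forall p, p \in l -> Rg p.1 p.2) -> is_decomp Rg (\sum_(p <- l) p.2) (dec l).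
Proof.
move=> H; split; [exact: uniq_dec | | by rewrite sum_dec].
by move=> p /mapP [a _ ->] /=; apply: Rg_coef.
Qed.

Lemma coef_notin l a : a \notin map fst l -> coef l a = 0.
Proof.
move=> Ha; rewrite /coef big1_seq // => p /andP [/eqP E Hp].
by move: Ha; rewrite -E; move/negP; case; apply/mapP; exists p.
Qed.

Lemma coef_uniq s a x : uniq (map fst s) -> (a, x) \in s -> coef s a = x.
Proof.
elim: s => // p s IH /= /andP [nps us]; rewrite in_cons /coef big_cons => /orP [/eqP E|H].
  subst p => /=; rewrite eqxx.
  have -> : \sum_(p0 <- s | p0.1 == a) p0.2 = coef s a by [].
  by rewrite coef_notin ?addr0.
have pa : (p.1 == a) = false.
  apply/negP => /eqP E; move: nps; rewrite E => /negP; apply; apply/mapP; by exists (a, x).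
by rewrite pa; apply: IH.
Qed.

Lemma coef_dec l a : coef (dec l) a = coef l a.
Proof.
have [Ha|Ha] := boolP (a \in map fst l).
  by apply: coef_uniq; [exact: uniq_dec | apply/mapP; exists a; rewrite ?mem_undup].
rewrite !coef_notin //; by rewrite /dec -map_comp map_id_in ?mem_undup.
Qed.

Lemma coef_cat s t a : coef (s ++ t) a = coef s a + coef t a.
Proof. by rewrite /coef big_cat. Qed.

Lemma coef_neg t a : coef [seq (p.1, - p.2) | p <- t] a = - coef t a.
Proof. by rewrite /coef big_map sumrN. Qed.

Lemma decomp_unique r s t : is_decomp Rg r s -> is_decomp Rg r t -> forall a, coef s a = coef t a.
Proof.
move=> [us Hs rs] [ut Ht rt] a.
pose l := s ++ [seq (p.1, - p.2) | p <- t].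
have Hl : forall p, p \in l -> Rg p.1 p.2.
  move=> p; rewrite mem_cat => /orP [|/mapP [q Hq ->]] /=; first exact: Hs.
  by apply: RgN; apply: Ht.

have Hd := dec_ok Hl.
have sum0 : \sum_(p <- l) p.2 = 0 by rewrite big_cat big_map /= sumrN -rs -rt subrr.
rewrite sum0 in Hd.
have [Ha|Ha] := boolP (a \in map fst l).
  have Hin : (a, coef l a) \in dec l by apply/mapP; exists a; rewrite ?mem_undup.
  have H0 : coef l a = 0 by have := gd_direct gd Hd Hin.
  by move: H0; rewrite coef_cat coef_neg => /eqP; rewrite subr_eq0 => /eqP.
move: Ha; rewrite map_cat mem_cat negb_or -map_comp => /andP [Hs' Ht'].
rewrite !coef_notin //.
Qed.

Lemma comp_coef r s x : is_decomp Rg r s -> components Rg r x -> exists a, x = coef s a.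
Proof.
move=> Hs [t [Ht [a Ha]]]; exists a.
by rewrite (decomp_unique Hs Ht) (coef_uniq _ Ha) //; case: Ht.
Qed.

Lemma decomp1 a x : Rg a x -> is_decomp Rg x [:: (a, x)].
Proof. by move=> H; split => //; [move=> p; rewrite inE => /eqP -> | rewrite big_seq1]. Qed.


Definition ideal_hs (I : K -> Prop) := is_ideal R I /\ forall r, I r ->
  exists l : seq (G * K), (forall p, p \in l -> Rg p.1 p.2 /\ I p.2) /\ r = \sum_(p <- l) p.2.

Section Ideal.
Variable I : K -> Prop.
Hypothesis HI : is_ideal R I.
Lemma I_R x : I x -> R x. Proof. by case: HI => H _; apply: H. Qed.
Lemma I0 : I 0. Proof. by case: HI => _ []. Qed.
Lemma ID x y : I x -> I y -> I (x + y). Proof. by case: HI => _ [] _ H _; apply: H. Qed.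
Lemma IM r x : R r -> I x -> I (r * x). Proof. by case: HI => _ [] _ _ H; apply: H. Qed.
Lemma IN x : I x -> I (- x).
Proof. by move=> H; rewrite -mulN1r; apply: IM => //; apply: RN; exact: R1. Qed.
Lemma IB x y : I x -> I y -> I (x - y). Proof. by move=> Hx Hy; apply: ID => //; exact: IN. Qed.
Lemma I_sum (T : eqType) (l : seq T) (P : pred T) (F : T -> K) :
  (forall x, x \in l -> P x -> I (F x)) -> I (\sum_(x <- l | P x) F x).
Proof.
elim: l => [|y l IH] H; first by rewrite big_nil; exact: I0.
rewrite big_cons; case: ifP => Py.
  by apply: ID; [apply: H; rewrite ?mem_head | apply: IH => x Hx; apply: H; rewrite in_cons Hx orbT].
by apply: IH => x Hx; apply: H; rewrite in_cons Hx orbT.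
Qed.
End Ideal.

Lemma hs_homog I : ideal_hs I -> homogeneous_ideal R Rg I.
Proof.
move=> [HI Hs]; split => // r Ir; have [l [Hl ->]] := Hs r Ir.
exists (dec l); split; first by apply: dec_ok => p /Hl [].
move=> p /mapP [a _ ->] /=; apply: I_sum => // q Hq _; by case: (Hl q Hq).
Qed.

Lemma homog_hs I : homogeneous_ideal R Rg I -> ideal_hs I.
Proof.
move=> [HI Hs]; split => // r Ir; have [l [[_ Hl ->] HlI]] := Hs r Ir.
by exists l; split => // p Hp; split; [apply: Hl | apply: HlI].
Qed.

Lemma homog_comp I r x : homogeneous_ideal R Rg I -> I r -> components Rg r x -> I x.
Proof.
move=> [HI Hs] Ir Hx; have [s [Hd HsI]] := Hs r Ir.
have [a ->] := comp_coef Hd Hx; apply: I_sum => // p Hp _; exact: HsI.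
Qed.

End Graded.


Section Prime.
Variables (G : zmodType) (K : fieldType) (Gam : G -> Prop) (R : K -> Prop) (Rg : G -> K -> Prop).
Hypothesis gd : graded_domain Gam R Rg.

Lemma uniq_filter_fst (s : seq (G * K)) (P : pred (G * K)) :
  uniq (map fst s) -> uniq (map fst (filter P s)).
Proof. by move=> H; apply: subseq_uniq H; apply: map_subseq; apply: filter_subseq. Qed.

Lemma entry_coef (s : seq (G * K)) a : uniq (map fst s) -> a \in map fst s -> (a, coef s a) \in s.
Proof.
move=> us /mapP [p Hp ->]; rewrite (coef_uniq us (x := p.2)) //.
  by case: p Hp.
by case: p Hp.
Qed.

Lemma split_nonI (I : K -> Prop) x : is_ideal R I -> R x -> ~ I x ->
  exists s : seq (G * K), [/\ uniq (map fst s), s != [::],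
    forall p, p \in s -> Rg p.1 p.2 /\ ~ I p.2 &
    I (x - \sum_(p <- s) p.2)].
Proof.
move=> HI Rx nIx; have [s [us Hs rs]] := gd_sum gd Rx.
pose P (p : G * K) := `[< ~ I p.2 >].
exists (filter P s); split.
- exact: uniq_filter_fst.
- apply/negP => /eqP E; apply: nIx.
  have H1 : I (\sum_(p <- s | ~~ P p) p.2).
    by apply: (I_sum HI) => // p _ /negP Hp; apply: contrapT => H; apply: Hp; apply/asboolP.
  suff -> : x = \sum_(p <- s | ~~ P p) p.2 by [].
  by rewrite rs (bigID P) /= -big_filter E big_nil add0r.
- move=> p; rewrite mem_filter => /andP [/asboolP Hp Hs']; split => //; exact: Hs.
- rewrite rs (bigID P) /= big_filter addrC addrK.
  by apply: (I_sum HI) => // p _ /negP Hp; apply: contrapT => H; apply: Hp; apply/asboolP.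
Qed.

Lemma hprime_prime (I : K -> Prop) : homogeneous_ideal R Rg I ->
  (forall a b x y, Rg a x -> Rg b y -> I (x * y) -> I x \/ I y) ->
  forall x y, R x -> R y -> I (x * y) -> I x \/ I y.
Proof.
move=> HI hp x y Rx Ry Ixy.
have HI' := HI.1.
have [Ix|nIx] := pselect (I x); first by left.
have [Iy|nIy] := pselect (I y); first by right.
exfalso.
have [s [us sn Hs Iu]] := split_nonI HI' Rx nIx.
have [t [ut tn Ht Iv]] := split_nonI HI' Ry nIy.
set x' := \sum_(p <- s) p.2 in Iu.
set y' := \sum_(p <- t) p.2 in Iv.
have Rx' : R x' by apply: (R_sum gd) => // p Hp _; apply: (gd_compR gd (a := p.1)); case: (Hs p Hp).
have Ixy' : I (x' * y').
  have -> : x' * y' = x * y - x' * (y - y') - (x - x') * y by ring.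
  apply: (IB gd HI'); first apply: (IB gd HI') => //.
    exact: (IM HI' Rx' Iv).
  by rewrite mulrC; apply: (IM HI' Ry Iu).
have [a [b [Ha Hb Hu]]] := upp (gd_torsion_free gd) (A := map fst s) (B := map fst t)
  (ltac:(by case: (s) sn)) (ltac:(by case: (t) tn)).
have Esa := entry_coef us Ha; have Etb := entry_coef ut Hb.
pose l := [seq (p.1 + q.1, p.2 * q.2) | p <- s, q <- t].
have Hl : forall p, p \in l -> Rg p.1 p.2.
  move=> r /allpairsP [[p q] [Hp Hq ->]] /=.
  by apply: (gd_compM gd); [case: (Hs p Hp) | case: (Ht q Hq)].
have sl : \sum_(r <- l) r.2 = x' * y'.
  by rewrite big_allpairs_dep /= /x' /y' mulr_suml; apply: eq_bigr => p _; rewrite mulr_sumr.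
have Hd := dec_ok gd Hl; rewrite sl in Hd.
have [sI [HsI HsII]] := HI.2 _ Ixy'.
have Ic : I (coef l (a + b)).
  rewrite -coef_dec (decomp_unique gd Hd HsI).
  by apply: (I_sum HI') => // p Hp _; exact: HsII.
have Ec : coef l (a + b) = coef s a * coef t b.
  rewrite /coef big_mkcond big_allpairs_dep /= [in RHS]big_mkcond /= mulr_suml.
  apply: eq_big_seq => p Hp.
  rewrite [in RHS]big_mkcond /= mulr_sumr; apply: eq_big_seq => q Hq.
  have [E|nE] := eqVneq (p.1 + q.1) (a + b).
    have [-> ->] := Hu _ _ (map_f fst Hp) (map_f fst Hq) E.
    by rewrite !eqxx.
  rewrite ?(negbTE nE); case: eqP => Ea; case: eqP => Eb; rewrite ?mulr0 ?mul0r //.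
  by rewrite Ea Eb eqxx in nE.
rewrite Ec in Ic.
have [|] := hp a b _ _ (proj1 (Hs _ Esa)) (proj1 (Ht _ Etb)) Ic.
  exact: (proj2 (Hs _ Esa)).
exact: (proj2 (Ht _ Etb)).
Qed.

End Prime.


Section Span.
Variables (L : comPzRingType) (A S : L -> Prop).

Lemma span0 : span A S 0.
Proof. by exists [::]; rewrite big_nil. Qed.

Lemma span_gen x : A 1 -> S x -> span A S x.
Proof. by move=> A1 Sx; exists [:: (1, x)]; split; [move=> p; rewrite inE => /eqP -> | rewrite big_seq1 mul1r]. Qed.

Lemma spanD x y : span A S x -> span A S y -> span A S (x + y).
Proof.
move=> [s [Hs ->]] [t [Ht ->]]; exists (s ++ t); split; last by rewrite big_cat.
by move=> p; rewrite mem_cat => /orP [/Hs|/Ht].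
Qed.

Lemma spanM r x : (forall a b, A a -> A b -> A (a * b)) -> A r -> span A S x -> span A S (r * x).
Proof.
move=> AM Ar [s [Hs ->]]; exists [seq (r * p.1, p.2) | p <- s]; split.
  move=> p /mapP [q Hq ->] /=; have [H1 H2] := Hs q Hq; split => //; exact: AM.
by rewrite big_map mulr_sumr; apply: eq_bigr => p _ /=; rewrite mulrA.
Qed.

Lemma span_submod : (forall a b, A a -> A b -> A (a * b)) -> is_submod A (span A S).
Proof. move=> AM; split; [exact: span0 | exact: spanD | move=> r x; exact: spanM]. Qed.

Lemma span_min E : is_submod A E -> (forall x, S x -> E x) -> forall x, span A S x -> E x.
Proof.
move=> [E0 ED EM] HS x [s [Hs ->]]; elim: s Hs => [|p s IH] Hs; first by rewrite big_nil.
rewrite big_cons; apply: ED; last by apply: IH => q Hq; apply: Hs; rewrite in_cons Hq orbT.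
by have [H1 H2] := Hs p (mem_head _ _); apply: EM => //; apply: HS.
Qed.

Lemma span_mono (S' : L -> Prop) : (forall x, S x -> S' x) -> forall x, span A S x -> span A S' x.
Proof. by move=> H x [s [Hs ->]]; exists s; split => // p /Hs [? ?]; split => //; apply: H. Qed.

End Span.


Section Star.
Variables (G : zmodType) (K : fieldType) (Gam : G -> Prop) (R : K -> Prop) (Rg : G -> K -> Prop)
  (star : (K -> Prop) -> (K -> Prop)).
Hypothesis gd : graded_domain Gam R Rg.
Hypothesis ss : semistar R star.

Local Notation st := (stilde R star).

Lemma RMc : forall a b, R a -> R b -> R (a * b).
Proof. exact: RM gd. Qed.

Lemma R_submod : is_submod R R.
Proof. split; [exact: R0 gd | exact: RD gd | exact: RMc]. Qed.

Lemma nzR : nz_submod R R.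
Proof. split; [exact: R_submod | exists 1; split; [exact: R1 gd | exact: oner_neq0]]. Qed.

Lemma ideal_nz I : is_ideal R I -> (exists x, I x /\ x != 0) -> nz_submod R I.
Proof. by move=> [_ H] Hx. Qed.

Lemma fg_ideal J : is_fg_ideal R J -> is_ideal R J.
Proof.
move=> [l [Hl ->]]; rewrite /is_ideal; split; last exact: span_submod RMc.
by move=> x; apply: (span_min R_submod) => y /Hl.
Qed.

Lemma spanR1 : span R (fun y => y \in [:: 1]) = R.
Proof.
apply: funext => x; apply: propext; split.
  by apply: (span_min R_submod) => y; rewrite inE => /eqP ->; exact: R1 gd.
move=> Rx; exists [:: (x, 1)]; split; last by rewrite big_seq1 mulr1.
move=> p; rewrite inE => /eqP -> /=; split => //; by rewrite inE.
Qed.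

Lemma fgR : is_fg_ideal R R.
Proof. exists [:: 1]; split; [by move=> y; rewrite inE => /eqP ->; exact: R1 gd | by rewrite spanR1]. Qed.

Lemma st_ext I : is_ideal R I -> forall x, I x -> st I x.
Proof.
move=> HI x Ix; exists R; split; [exact: fgR | exists 1; split; [exact: R1 gd | exact: oner_neq0] | by [] |].
by move=> j Rj; rewrite mulrC; apply: (IM HI).
Qed.

Lemma star_ext E : nz_submod R E -> forall x, E x -> star E x.
Proof. by move=> HE; apply: (ss_ext ss HE). Qed.

Lemma star_R1 : star R 1.
Proof. by apply: star_ext nzR _ (R1 gd). Qed.

Lemma star_full J E : nz_submod R J -> is_ideal R E -> psubset J E -> star J = star R -> star E = star R.
Proof.
move=> HJ HE JE SJ.
have nzE : nz_submod R E by case: HJ => _ [x [Jx nx]]; split; [exact: HE.2 | exists x; split => //; exact: JE].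
apply: funext => x; apply: propext; split.
  by apply: (ss_mono ss nzE nzR); case: HE.
by rewrite -SJ; apply: (ss_mono ss HJ nzE).
Qed.

Lemma scale_nz a E : a != 0 -> nz_submod R E -> nz_submod R (scale_set a E).
Proof.
move=> na [[E0 ED EM] [x [Ex nx]]]; split; last by exists (a * x); split; [exists x | rewrite mulf_neq0].
split; first by exists 0; rewrite mulr0.
  by move=> _ _ [y [Ey ->]] [z [Ez ->]]; exists (y + z); split; [apply: ED | rewrite mulrDr].
by move=> r _ Rr [y [Ey ->]]; exists (r * y); split; [apply: EM | rewrite mulrCA].
Qed.

Definition prodl (l1 l2 : seq K) := [seq a * b | a <- l1, b <- l2].

Lemma prod_in l1 l2 a b : (forall y, y \in l1 -> R y) -> (forall y, y \in l2 -> R y) ->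
  span R (fun y => y \in l1) a -> span R (fun y => y \in l2) b ->
  span R (fun y => y \in prodl l1 l2) (a * b).
Proof.
move=> H1 H2 Ha Hb.
have sub : is_submod R (span R (fun y => y \in prodl l1 l2)) by apply: span_submod RMc.
have step : forall u, u \in l1 -> span R (fun y => y \in prodl l1 l2) (u * b).
  move=> u Hu.
  pose E := fun y => span R (fun y => y \in prodl l1 l2) (u * y).
  have HE : is_submod R E.
    case: sub => S0 SD SM; split; rewrite /E ?mulr0 //.
      by move=> x y Hx Hy; rewrite mulrDr; apply: SD.
    by move=> r x Rr Hx; rewrite mulrCA; apply: SM.
  apply: (span_min HE) Hb => v Hv; rewrite /E; apply: span_gen; first exact: R1 gd.
  by apply/allpairsP; exists (u, v).
pose E := fun x => span R (fun y => y \in prodl l1 l2) (x * b).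
have HE : is_submod R E.
  case: sub => S0 SD SM; split; rewrite /E ?mul0r //.
    by move=> x y Hx Hy; rewrite mulrDl; apply: SD.
  by move=> r x Rr Hx; rewrite -mulrA; apply: SM.
exact: (span_min HE) Ha.
Qed.

Lemma prod_full J1 J2 : is_fg_ideal R J1 -> is_fg_ideal R J2 ->
  (exists x, J1 x /\ x != 0) -> (exists x, J2 x /\ x != 0) ->
  star J1 = star R -> star J2 = star R ->
  exists J, [/\ is_fg_ideal R J, exists x, J x /\ x != 0, star J = star R &
     forall E, is_ideal R E -> (forall a b, J1 a -> J2 b -> E (a * b)) -> psubset J E ].
Proof.
move=> [l1 [H1 E1]] [l2 [H2 E2]] [u [J1u nu]] [v [J2v nv]] S1 S2.
pose J := span R (fun y => y \in prodl l1 l2).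
have HJ : is_fg_ideal R J.
  exists (prodl l1 l2); split => // y /allpairsP [[a b] [Ha Hb ->]] /=; apply: RMc; [exact: H1 | exact: H2].
have Jin : forall a b, J1 a -> J2 b -> J (a * b).
  by move=> a b; rewrite E1 E2; apply: prod_in.
have nzJ : exists x, J x /\ x != 0 by exists (u * v); split; [apply: Jin | rewrite mulf_neq0].
have idJ := fg_ideal HJ.
have nzJ' : nz_submod R J by apply: ideal_nz.
have idJ1 := fg_ideal (ex_intro _ l1 (conj H1 E1)).
have idJ2 := fg_ideal (ex_intro _ l2 (conj H2 E2)).
have nzJ2 : nz_submod R J2 by apply: ideal_nz => //; exists v.
exists J; split => //.
  have sJ1 : psubset J1 (star J).
    move=> a J1a; have [->|na] := eqVneq a 0.
      by case: (ss_dom ss nzJ') => [[S0 _ _] _].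
    have : scale_set a (star J2) a by exists 1; split; [rewrite S2; exact: star_R1 | rewrite mulr1].
    rewrite -(ss_scale ss na nzJ2); apply: (ss_mono ss (scale_nz na nzJ2) nzJ').
    by move=> _ [b [J2b ->]]; apply: Jin.
  apply: funext => x; apply: propext; split.
    by apply: (ss_mono ss nzJ' nzR); case: idJ.
  rewrite -S1 => Hx; rewrite -(ss_idem ss nzJ').
  apply: (ss_mono ss (ideal_nz idJ1 (ex_intro _ u (conj J1u nu))) (ss_dom ss nzJ') sJ1) Hx.
move=> E HE Hab; apply: (span_min HE.2) => y /allpairsP [[a b] [Ha Hb ->]] /=.
apply: Hab; [rewrite E1 | rewrite E2]; apply: span_gen => //; exact: R1 gd.
Qed.


Definition P0 (B I : K -> Prop) := [/\ ideal_hs R Rg I, psubset B I & ~ st I 1].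

Lemma st1P I : st I 1 <-> exists J, [/\ is_fg_ideal R J, (exists y, J y /\ y != 0), star J = star R & psubset J I].
Proof.
split; move=> [J [H1 H2 H3 H4]]; exists J; split => //.
  by move=> j /H4; rewrite mul1r.
by move=> j /H4; rewrite mul1r.
Qed.

Lemma P0_ideal B I : P0 B I -> is_ideal R I.
Proof. by case=> [[]]. Qed.

Lemma chain_fg B (F : (K -> Prop) -> Prop) X0 (l : seq K) :
  (forall X, F X -> X = set0 \/ P0 B X) -> classical_sets.total_on F classical_sets.subset ->
  F X0 -> P0 B X0 ->
  (forall y, y \in l -> exists2 X, F X & X y) ->
  exists X, [/\ F X, P0 B X & forall y, y \in l -> X y].
Proof.
move=> HF tot FX0 PX0; elim: l => [|y l IH] Hl; first by exists X0.
have [X [FX PX HX]] := IH (fun z Hz => Hl z (ltac:(by rewrite in_cons Hz orbT))).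
have [Y FY Yy] := Hl y (mem_head _ _).
have PY : P0 B Y by case: (HF Y FY) => // E; rewrite E in Yy.
have [XY|YX] := tot X Y FX FY.
  exists Y; split => // z; rewrite in_cons => /orP [/eqP -> //|Hz]; exact: XY (HX z Hz).
exists X; split => // z; rewrite in_cons => /orP [/eqP ->|Hz]; [exact: YX | exact: HX].
Qed.

Lemma zorn_max B : P0 B B -> exists M, P0 B M /\ forall I, P0 B I -> psubset M I -> I = M.
Proof.
move=> PBB.
pose P := fun X : K -> Prop => X = set0 \/ P0 B X.
have [|A [PA Amax]] := @Zorn_bigcup K P.
  move=> F FP tot.
  have [[X0 FX0 PX0]|none] := pselect (exists2 X0, F X0 & P0 B X0); last first.
    left; apply: funext => x; apply: propext; split => // [[X FX Xx]].
    case: (FP X FX) => E; first by rewrite E in Xx.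
    by exfalso; apply: none; exists X.
  right.
  have memF : forall X x, F X -> X x -> P0 B X.
    by move=> X x FX Xx; case: (FP X FX) => // E; rewrite E in Xx.
  set U := classical_sets.bigcup F id.
  have idU : is_ideal R U.
    split.
      by move=> x [X FX Xx]; apply: (I_R (P0_ideal (memF X x FX Xx))).
    split.
    - by exists X0 => //; apply: (I0 (P0_ideal PX0)).
    - move=> x y [X FX Xx] [Y FY Yy].
      have [XY|YX] := tot X Y FX FY.
        by exists Y => //; apply: (ID (P0_ideal (memF Y y FY Yy))) => //; exact: XY.
      by exists X => //; apply: (ID (P0_ideal (memF X x FX Xx))) => //; exact: YX.
    - by move=> r x Rr [X FX Xx]; exists X => //; apply: (IM (P0_ideal (memF X x FX Xx))).
  split.
  - split => // x [X FX Xx].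
    have [[_ Hs] _ _] := memF X x FX Xx.
    have [l [Hl ->]] := Hs x Xx; exists l; split => // p Hp.
    by have [H1 H2] := Hl p Hp; split => //; exists X.
  - by move=> x Bx; exists X0 => //; case: PX0 => _ H _; apply: H.
  - move/st1P => [J [fgJ nzJ SJ JU]].
    have [l [Hl EJ]] := fgJ.
    have lU : forall y, y \in l -> exists2 X, F X & X y.
      move=> y Hy; have : U y by apply: JU; rewrite EJ; apply: span_gen => //; exact: R1 gd.
      by case=> X FX Xy; exists X.
    have [X [FX PX HX]] := chain_fg FP tot FX0 PX0 lU.
    have idX := P0_ideal PX.
    case: PX => _ _; apply; apply/st1P; exists J; split => //.
    by rewrite EJ; apply: (span_min idX.2).
have nA : A <> set0.
  move=> EA; apply: (Amax B) => //; last by right.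
  rewrite EA; split; first by move=> x [].
  by move=> H; apply: (H 0); apply: (I0 (P0_ideal PBB)).
have PA' : P0 B A by case: PA.
exists A; split => // I PI AI.
have [IA|nIA] := pselect (psubset I A).
  by apply: funext => x; apply: propext; split; [apply: IA | apply: AI].
by exfalso; apply: (Amax I); [split | right].
Qed.

End Star.


Section Star2.
Variables (G : zmodType) (K : fieldType) (Gam : G -> Prop) (R : K -> Prop) (Rg : G -> K -> Prop)
  (star : (K -> Prop) -> (K -> Prop)).
Hypothesis gd : graded_domain Gam R Rg.
Hypothesis ss : semistar R star.

Local Notation st := (stilde R star).
Local Notation P0 := (P0 R Rg star).

Definition addx (I : K -> Prop) x := fun z => exists m r, [/\ I m, R r & z = m + x * r].

Lemma addx_hs I a x : ideal_hs R Rg I -> Rg a x -> ideal_hs R Rg (addx I x).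
Proof.
move=> [HI Hs] Hx; have Rx : R x := gd_compR gd Hx.
have inI : forall m, I m -> addx I x m by move=> m Im; rewrite /addx; exists m, 0; split => //; [exact: R0 gd | rewrite mulr0 addr0].
split; first split.
- by move=> _ [m [r [Im Rr ->]]]; apply: (RD gd); [exact: (I_R HI Im) | exact: (RM gd Rx Rr)].
- split.
  + by apply: inI; exact: (I0 HI).
  + move=> _ _ [m1 [r1 [I1 R1' ->]]] [m2 [r2 [I2 R2' ->]]].
    rewrite /addx; exists (m1 + m2), (r1 + r2); split; [by apply: (ID HI) | by apply: (RD gd) | ring].
  + move=> c _ Rc [m [r [Im Rr ->]]].
    rewrite /addx; exists (c * m), (c * r); split; [by apply: (IM HI) | by apply: (RM gd) | ring].
move=> _ [m [r [Im Rr ->]]].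
have [l [Hl ->]] := Hs m Im.
have [s [_ Hs' Er]] := gd_sum gd Rr.
exists (l ++ [seq (a + p.1, x * p.2) | p <- s]); split.
  move=> p; rewrite mem_cat => /orP [/Hl [H1 H2]|/mapP [q Hq ->]]; first by split => //; apply: inI.
  split; first exact: (gd_compM gd Hx (Hs' q Hq)).
  rewrite /addx; exists 0, q.2; split => //; [exact: (I0 HI) | exact: (gd_compR gd (Hs' q Hq)) | by rewrite add0r].
by rewrite big_cat big_map /= Er mulr_sumr.
Qed.

Lemma addx_sub I x : is_ideal R I -> psubset I (addx I x).
Proof. by move=> HI m Im; exists m, 0; split => //; [exact: R0 gd | rewrite mulr0 addr0]. Qed.

Lemma addx_x I x : is_ideal R I -> addx I x x.
Proof. by move=> HI; rewrite /addx; exists 0, 1; split; [exact: (I0 HI) | exact: R1 gd | ring]. Qed.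

Lemma maxS M : P0 M M -> (exists x, M x /\ x != 0) -> (forall I, P0 M I -> I = M) ->
  (forall x y, R x -> R y -> M (x * y) -> M x \/ M y) /\ hQMax R Rg st M.
Proof.
move=> [hsM _ nstM] nzM maxM.
have idM := hsM.1.
have grow : forall a x, Rg a x -> ~ M x -> st (addx M x) 1.
  move=> a x Hx nMx; apply: contrapT => nst; apply: nMx.
  have E : addx M x = M by apply: maxM; split => //; [exact: addx_hs Hx | exact: addx_sub].
  by rewrite -E; apply: addx_x.
have hp : forall a b x y, Rg a x -> Rg b y -> M (x * y) -> M x \/ M y.
  move=> a b x y Hx Hy Mxy; apply: contrapT => H.
  have nMx : ~ M x by move=> ?; apply: H; left.
  have nMy : ~ M y by move=> ?; apply: H; right.
  have [J1 [fg1 nz1 S1 sub1]] := proj1 (st1P R star (addx M x)) (grow a x Hx nMx).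
  have [J2 [fg2 nz2 S2 sub2]] := proj1 (st1P R star (addx M y)) (grow b y Hy nMy).
  have [J [fgJ nzJ SJ Jsub]] := prod_full gd ss fg1 fg2 nz1 nz2 S1 S2.
  apply: nstM; apply/st1P; exists J; split => //; apply: Jsub => // u v J1u J2v.
  have [m [r [Mm Rr Eu]]] := sub1 u J1u.
  have [m' [r' [Mm' Rr' Ev]]] := sub2 v J2v.
  have Rx := gd_compR gd Hx; have Ry := gd_compR gd Hy.
  have Rm := I_R idM Mm; have Rm' := I_R idM Mm'.
  have -> : u * v = m * (m' + y * r') + m' * (x * r) + (r * r') * (x * y) by rewrite Eu Ev; ring.
  apply: (ID idM); first apply: (ID idM).
  - by rewrite mulrC; apply: (IM idM) => //; apply: (RD gd) => //; apply: (RM gd).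
  - by rewrite mulrC; apply: (IM idM) => //; apply: (RM gd).
  - by apply: (IM idM) => //; apply: (RM gd).
have prM := hprime_prime gd (hs_homog gd hsM) hp.
split => //.
have nM1 : ~ M 1 by move=> M1; apply: nstM; exact: (st_ext star gd idM M1).
have quasi : quasi_ideal R st M.
  split => //; apply: funext => z; apply: propext; split; last first.
    by move=> Mz; split; [exact: (st_ext star gd idM Mz) | exact: (I_R idM Mz)].
  move=> [[J [fgJ nzJ SJ HJ]] Rz].
  have [[j Jj nMj]|allJ] := pselect (exists2 j, J j & ~ M j).
    have Rj : R j by apply: (I_R (fg_ideal gd fgJ)).
    by case: (prM z j Rz Rj (HJ j Jj)).
  exfalso; apply: nstM; apply/st1P; exists J; split => // j Jj.
  by apply: contrapT => nMj; apply: allJ; exists j.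
split; first by split => //; exact: (hs_homog gd hsM).
move=> I [qI hI nI1] MI; apply: maxM; split => //; first exact: homog_hs hI.
move=> stI; apply: nI1; case: qI => _ _ <-; split => //; exact: R1 gd.
Qed.


Lemma exists_hQMax_above B : ideal_hs R Rg B -> (exists x, B x /\ x != 0) -> ~ st B 1 ->
  exists Q, hQMax R Rg st Q /\ psubset B Q.
Proof.
move=> hsB nzB nst.
have [M [[hsM BM nstM] maxM]] := zorn_max gd (B := B) (And3 hsB (fun x H => H) nst).
have [_ HM] := maxS (And3 hsM (fun x H => H) nstM)
  (ltac:(case: nzB => x [Bx nx]; exists x; split => //; exact: BM Bx))
  (fun I PI => maxM I (ltac:(case: PI => H1 H2 H3; split => // x Bx; exact: H2 x (BM x Bx))) (ltac:(by case: PI))).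
by exists M.
Qed.

Lemma hQMax_P0 Q : hQMax R Rg st Q ->
  [/\ P0 Q Q, exists x, Q x /\ x != 0 & forall I, P0 Q I -> I = Q].
Proof.
move=> [[qQ hQ nQ1] maxQ].
have nst : ~ st Q 1 by move=> H; apply: nQ1; case: qQ => _ _ <-; split => //; exact: R1 gd.
have nz : exists x, Q x /\ x != 0 by case: qQ.
split => //; first by split => //; exact: homog_hs hQ.
move=> I [hsI QI nstI].
have [Q' [HQ' IQ']] := exists_hQMax_above hsI
  (ltac:(case: nz => x [Qx nx]; exists x; split => //; exact: QI x Qx)) nstI.
have EQ : Q' = Q by apply: maxQ; [case: HQ' => [] | move=> x Qx; apply: IQ'; apply: QI].
apply: funext => x; apply: propext; split; [rewrite -EQ; exact: IQ' | exact: QI].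
Qed.

Lemma hQMax_prime Q : hQMax R Rg st Q -> forall x y, R x -> R y -> Q (x * y) -> Q x \/ Q y.
Proof. by move=> HQ; have [H1 H2 H3] := hQMax_P0 HQ; case: (maxS H1 H2 H3). Qed.

Lemma hQMax_props Q : hQMax R Rg st Q ->
  [/\ is_ideal R Q, ~ Q 1, homogeneous_ideal R Rg Q & ~ st Q 1].
Proof.
move=> [[qQ hQ nQ1] _]; split => //; first by case: qQ.
by move=> H; apply: nQ1; case: qQ => _ _ <-; split => //; exact: R1 gd.
Qed.

Lemma exists_hQMax : psubset (star R) (RH R Rg) -> star R <> RH R Rg -> exists Q, hQMax R Rg st Q.
Proof.
move=> hRH hneq; apply: contrapT => none; apply: hneq.
apply: funext => x; apply: propext; split; first exact: hRH.
move=> [a [h [Ra [nh [c Hh]] ->]]].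
have Rh : R h := gd_compR gd Hh.
pose B := scale_set h R.
have idB : is_ideal R B.
  split; first by move=> _ [z [Rz ->]]; apply: (RM gd).
  split; first by exists 0; split; [exact: R0 gd | rewrite mulr0].
    by move=> _ _ [y [Ry ->]] [z [Rz ->]]; exists (y + z); split; [apply: (RD gd) | rewrite mulrDr].
  by move=> r _ Rr [y [Ry ->]]; exists (r * y); split; [apply: (RM gd) | rewrite mulrCA].
have hsB : ideal_hs R Rg B.
  split => // _ [z [Rz ->]].
  have [s [_ Hs Ez]] := gd_sum gd Rz.
  exists [seq (c + p.1, h * p.2) | p <- s]; split; last by rewrite big_map Ez mulr_sumr.
  move=> _ /mapP [p Hp ->] /=; split; first exact: (gd_compM gd Hh (Hs p Hp)).
  by exists p.2; split => //; exact: (gd_compR gd (Hs p Hp)).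
have nzB : exists y, B y /\ y != 0 by exists h; split => //; exists 1; split; [exact: R1 gd | rewrite mulr1].
have stB : st B 1.
  apply: contrapT => nst; apply: none.
  by have [Q [HQ _]] := exists_hQMax_above hsB nzB nst; exists Q.
have [J [fgJ nzJ SJ JB]] := proj1 (st1P R star B) stB.
have nzJ' : nz_submod R J := ideal_nz (fg_ideal gd fgJ) nzJ.
have SB := star_full gd ss nzJ' idB JB SJ.
have : star B 1 by rewrite SB; exact: star_R1 gd ss.
rewrite /B (ss_scale ss nh (nzR gd)) => [[z [Sz Ez]]].
have zE : z = h^-1 by rewrite -[z]mul1r -(mulVf nh) -mulrA -Ez mulr1.
rewrite -zE.
have [[_ _ SM] _] := ss_dom ss (nzR gd).
exact: SM.
Qed.

End Star2.


Section Af.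
Variables (G : zmodType) (K : fieldType) (Gam : G -> Prop) (R : K -> Prop) (Rg : G -> K -> Prop).
Hypothesis gd : graded_domain Gam R Rg.

Local Notation Af := (Af R Rg).

Lemma comp_Rg r x : components Rg r x -> exists a, Rg a x.
Proof. by move=> [s [[_ Hs _] [a Ha]]]; exists a; exact: (Hs _ Ha). Qed.

Lemma comp_R r x : components Rg r x -> R x.
Proof. by move/comp_Rg => [a Ha]; exact: (gd_compR gd Ha). Qed.

Lemma comp0 x : components Rg 0 x -> x = 0.
Proof.
move=> H; have D0 : is_decomp Rg 0 [::] by split => //; rewrite big_nil.
by have [a ->] := comp_coef gd D0 H; rewrite /coef big_nil.
Qed.

Lemma Af_sub f : psubset (Af f) R.
Proof. by move=> x; apply: (span_min (R_submod gd)) => y [i /comp_R]. Qed.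

Lemma Af_ideal f : is_ideal R (Af f).
Proof. split; [exact: Af_sub | exact: span_submod (RM gd)]. Qed.

Lemma span_sum (L : comPzRingType) (A S : L -> Prop) (T : eqType) (l : seq T) (F : T -> L) :
  (forall x, x \in l -> span A S (F x)) -> span A S (\sum_(x <- l) F x).
Proof.
elim: l => [|y l IH] H; first by rewrite big_nil; exact: span0.
by rewrite big_cons; apply: spanD; [apply: H; exact: mem_head | apply: IH => x Hx; apply: H; rewrite in_cons Hx orbT].
Qed.

Lemma span_comp r : R r -> span R (components Rg r) r.
Proof.
move=> Rr; have [s Hs] := gd_sum gd Rr; have [_ Hs' Er] := Hs.
rewrite {2}Er; apply: (@span_sum _ R _ _ s (fun p => p.2)) => p Hp; apply: span_gen; first exact: R1 gd.
by exists s; split => //; exists p.1; case: p Hp.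
Qed.

Lemma Af_coef f i : polys R f -> Af f f`_i.
Proof. by move=> Hf; apply: (span_mono (S := components Rg f`_i)) => [x Hx|]; [exists i | exact: span_comp]. Qed.

Lemma Af0 x : Af 0 x -> x = 0.
Proof.
have HE : is_submod R (fun y : K => y = 0) by split => // [? ? -> ->|? ? _ ->]; rewrite ?addr0 ?mulr0.
by apply: (span_min HE) => y [i]; rewrite coef0; apply: comp0.
Qed.

Lemma Af_nz f : polys R f -> f != 0 -> exists x, Af f x /\ x != 0.
Proof. by move=> Hf nf; exists (lead_coef f); split; [exact: Af_coef | rewrite lead_coef_eq0]. Qed.

Lemma Af_fg f : polys R f -> is_fg_ideal R (Af f).
Proof.
move=> Hf.
have [l [Hl Hd]] : exists l : seq K, (forall y, y \in l -> exists i, components Rg f`_i y) /\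
   forall i, (i < size f)%N -> exists s, is_decomp Rg f`_i s /\ forall p, p \in s -> p.2 \in l.
  elim: (size f) => [|n [l [Hl Hd]]]; first by exists [::].
  have [s Hs] := gd_sum gd (Hf n).
  exists (l ++ map snd s); split.
    move=> y; rewrite mem_cat => /orP [/Hl //|/mapP [p Hp ->]].
    by exists n, s; split => //; exists p.1; case: p Hp.
  move=> i; rewrite ltnS leq_eqVlt => /orP [/eqP ->|Hi].
    by exists s; split => // p Hp; rewrite mem_cat map_f ?orbT.
  have [s' [Hs' Hl']] := Hd i Hi; exists s'; split => // p Hp.
  by rewrite mem_cat Hl'.
have R1' := R1 gd.
exists l; split.
  by move=> y /Hl [i Hi]; exact: comp_R Hi.
apply: funext => x; apply: propext; split.
  apply: (span_min (span_submod _ (RM gd))) => y [i Hi].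
  have [lt|ge] := ltnP i (size f).
    have [s [Hs Hsl]] := Hd i lt.
    have [a ->] := comp_coef gd Hs Hi.
    rewrite /coef big_mkcond; apply: span_sum => p Hp; case: eqP => _; [apply: span_gen => //; exact: Hsl | exact: span0].
  by move: Hi; rewrite nth_default // => /comp0 ->; exact: span0.
apply: (span_min (Af_ideal f).2) => y /Hl [i Hi].
by apply: span_gen => //; exists i.
Qed.

Lemma span_hs S : (forall x, S x -> R x /\ exists a, Rg a x) -> ideal_hs R Rg (span R S).
Proof.
move=> HS; split; first split.
- by apply: (span_min (R_submod gd)) => y /HS [].
- exact: span_submod (RM gd).
move=> _ [s [Hs ->]].
elim: s Hs => [|p s IH] Hs; first by exists [::]; rewrite !big_nil.
have [l [Hl El]] := IH (fun q Hq => Hs q (ltac:(by rewrite in_cons Hq orbT))).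
have [Rp Sp] := Hs p (mem_head _ _).
have [Rp2 [a Ha]] := HS _ Sp.
have [t [_ Ht Et]] := gd_sum gd Rp.
exists ([seq (q.1 + a, q.2 * p.2) | q <- t] ++ l); split.
  move=> q; rewrite mem_cat => /orP [/mapP [q' Hq' ->]|/Hl //] /=.
  split; first exact: (gd_compM gd (Ht _ Hq') Ha).
  apply: spanM => //; first exact: RM gd.
    exact: (gd_compR gd (Ht _ Hq')).
  by apply: span_gen => //; exact: R1 gd.
by rewrite big_cat big_cons El big_map /= Et mulr_suml.
Qed.

Lemma Af_hs f : ideal_hs R Rg (Af f).
Proof. apply: span_hs => x [i Hi]; split; [exact: comp_R Hi | exact: comp_Rg Hi]. Qed.

Lemma Af_in f Q : homogeneous_ideal R Rg Q -> polys Q f -> psubset (Af f) Q.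
Proof.
move=> HQ Hf; apply: (span_min HQ.1.2) => y [i Hi].
exact: (homog_comp gd HQ (Hf i) Hi).
Qed.

End Af.


Section Main.
Variables (G : zmodType) (K : fieldType) (Gam : G -> Prop) (R : K -> Prop) (Rg : G -> K -> Prop)
  (star : (K -> Prop) -> (K -> Prop)).
Hypothesis gd : graded_domain Gam R Rg.
Hypothesis ss : semistar R star.
Hypothesis hRH : psubset (star R) (RH R Rg).
Hypothesis hneq : star R <> RH R Rg.

Local Notation st := (stilde R star).
Local Notation hQ := (hQMax R Rg st).
Local Notation N := (Nstar R Rg star).
Local Notation Af := (Af R Rg).

Lemma exQ : exists Q, hQ Q.
Proof. exact: (exists_hQMax gd ss hRH hneq). Qed.

Lemma N_char f : N f <-> polys R f /\ ~ (exists Q, hQ Q /\ polys Q f).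
Proof.
split.
  move=> [Rf nf Sf]; split => // [[Q [HQ Qf]]].
  have [idQ nQ1 hQ' nstQ] := hQMax_props gd HQ.
  apply: nstQ; apply/st1P; exists (Af f); split => //.
  - exact: (Af_fg gd Rf).
  - exact: (Af_nz gd Rf nf).
  - exact: (Af_in gd hQ' Qf).
move=> [Rf nQ].
have nf : f != 0.
  apply/negP => /eqP E; apply: nQ; have [Q HQ] := exQ; exists Q; split => // i.
  by rewrite E coef0; have [H _ _ _] := hQMax_props gd HQ; exact: (I0 H).
split => //.
have [stA|nst] := pselect (st (Af f) 1).
  have [J [fgJ nzJ SJ JA]] := proj1 (st1P R star _) stA.
  exact: (star_full gd ss (ideal_nz (fg_ideal gd fgJ) nzJ) (Af_ideal gd f) JA SJ).
exfalso; have [Q [HQ AQ]] := exists_hQMax_above gd ss (Af_hs gd f) (Af_nz gd Rf nf) nst.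
by apply: nQ; exists Q; split => // i; apply: AQ; exact: (Af_coef gd i Rf).
Qed.


Lemma polys_mul f g : polys R f -> polys R g -> polys R (f * g).
Proof.
move=> Hf Hg i; rewrite coefM; apply: (R_sum gd) => k _ _; exact: (RM gd (Hf k) (Hg _)).
Qed.

Lemma polys_add f g : polys R f -> polys R g -> polys R (f + g).
Proof. by move=> Hf Hg i; rewrite coefD; apply: (RD gd). Qed.

Lemma polysC c : R c -> polys R c%:P.
Proof. by move=> Hc i; rewrite coefC; case: eqP => _ //; exact: (R0 gd). Qed.

Lemma polysX : polys R 'X.
Proof. by move=> i; rewrite coefX; case: eqP => _; [exact: (R1 gd) | exact: (R0 gd)]. Qed.

Lemma polysXn n : polys R 'X^n.
Proof. by move=> i; rewrite coefXn; case: eqP => _; [exact: (R1 gd) | exact: (R0 gd)]. Qed.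

Lemma min_nonQ Q (f : {poly K}) : ~ polys Q f ->
  exists i, ~ Q f`_i /\ forall k, (k < i)%N -> Q f`_k.
Proof.
move=> nQ.
have exP : exists i, `[< ~ Q f`_i >] by apply: contrapT => H; apply: nQ => i; apply: contrapT => H'; apply: H; exists i; apply/asboolP.
case: (ex_minnP exP) => m /asboolP Hm Hmin; exists m; split => // k Hk.
apply: contrapT => H; have := Hmin k (ltac:(by apply/asboolP)); by rewrite leqNgt Hk.
Qed.

Lemma polysQ_prime Q f g : hQ Q -> polys R f -> polys R g -> ~ polys Q f -> ~ polys Q g -> ~ polys Q (f * g).
Proof.
move=> HQ Rf Rg' nf ng Hfg.
have [idQ _ _ _] := hQMax_props gd HQ.
have prQ := hQMax_prime gd ss HQ.
have [i [nfi Hi]] := min_nonQ nf.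
have [j [ngj Hj]] := min_nonQ ng.
have := Hfg (i + j)%N; rewrite coefM (bigD1 (Ordinal (ltn_addr j (ltnSn i)))) //=.
have -> : (i + j - i = j)%N by rewrite addKn.
move=> Hs.
have Hrest : Q (\sum_(k < (i + j).+1 | k != Ordinal (ltn_addr j (ltnSn i))) f`_k * g`_(i + j - k)).
  apply: (I_sum idQ) => k _ nk.
  have [lt|gt] := ltnP k i.
    by rewrite mulrC; apply: (IM idQ (Rg' _) (Hi _ lt)).
  have kgt : (i < k)%N.
    rewrite ltn_neqAle gt andbT; apply: contra nk => /eqP E; apply/eqP; apply: val_inj => /=.
    by rewrite -E.
  apply: (IM idQ (Rf _)); apply: Hj.
  have := ltn_ord k; rewrite ltnS => kle.
  lia.
have : Q (f`_i * g`_j) by rewrite -(addrK (\sum_(k < (i + j).+1 | k != Ordinal (ltn_addr j (ltnSn i))) f`_k * g`_(i + j - k)) (f`_i * g`_j)); apply: (IB gd idQ).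
by case/(prQ _ _ (Rf i) (Rg' j)).
Qed.

Lemma N_mul f g : N f -> N g -> N (f * g).
Proof.
move=> /N_char [Rf nf] /N_char [Rg' ng]; apply/N_char; split; first exact: polys_mul.
move=> [Q [HQ Qfg]]; apply: (polysQ_prime HQ Rf Rg') Qfg.
  by move=> Qf; apply: nf; exists Q.
by move=> Qg; apply: ng; exists Q.
Qed.

Lemma N_1 : N 1.
Proof.
apply/N_char; split.
  by move=> i; rewrite coef1; case: eqP => _; [exact: (R1 gd) | exact: (R0 gd)].
move=> [Q [HQ Q1]]; have [_ nQ1 _ _] := hQMax_props gd HQ.
by apply: nQ1; have := Q1 0%N; rewrite coef1.
Qed.


Lemma key (P : {poly K} -> Prop) :
  (forall f, P f -> polys R f) -> P 0 ->
  (forall f g, P f -> P g -> P (f + g)) -> (forall f, P f -> P ('X * f)) ->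
  (forall f, P f -> ~ N f) ->
  exists Q, hQ Q /\ forall f, P f -> polys Q f.
Proof.
move=> PR P0' PD PX PN.
have PXn : forall n f, P f -> P ('X^n * f).
  elim=> [|n IH] f Pf; first by rewrite expr0 mul1r.
  by rewrite exprS -mulrA; apply: PX; apply: IH.
pose coefs_in (h1 h : {poly K}) := forall i, exists j, h`_j = h1`_i.
have Af_mono : forall h1 h, coefs_in h1 h -> psubset (Af h1) (Af h).
  move=> h1 h Hc x; apply: span_mono => y [i Hi]; have [j Ej] := Hc i; exists j; by rewrite Ej.
have combine : forall h1 h2, P h1 -> P h2 -> exists h, [/\ P h, coefs_in h1 h & coefs_in h2 h].
  move=> h1 h2 P1 P2; exists (h1 + 'X^(size h1) * h2); split.
  - by apply: PD => //; apply: PXn.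
  - move=> i; have [lt|ge] := ltnP i (size h1).
      by exists i; rewrite coefD coefXnM lt addr0.
    exists (size (h1 + 'X^(size h1) * h2)); rewrite nth_default // nth_default //.
  - move=> i; exists (size h1 + i)%N; rewrite coefD coefXnM ltnNge leq_addr /= addKn.
    by rewrite nth_default ?add0r // leq_addr.
have [allz|nallz] := pselect (forall f, P f -> f = 0); last first.
  have [f0 [Pf0 nf0]] : exists f0, P f0 /\ f0 <> 0.
    apply: contrapT => H; apply: nallz => f Pf; apply: contrapT => nf; apply: H; by exists f.
  pose S := fun c => exists f i, P f /\ components Rg f`_i c.
  pose B := span R S.
  have inB : forall f i, P f -> B f`_i.
    move=> f i Pf; apply: (span_mono (S := components Rg f`_i)); first by move=> c Hc; exists f, i.
    exact: (span_comp gd (PR f Pf i)).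
  have B_in : forall y, B y -> exists h, P h /\ Af h y.
    move=> _ [s [Hs ->]]; elim: s Hs => [|p s IH] Hs.
      by exists 0; split => //; rewrite big_nil; exact: span0.
    have [h' [Ph' Hh']] := IH (fun q Hq => Hs q (ltac:(by rewrite in_cons Hq orbT))).
    have [Rp [f [i [Pf Hc]]]] := Hs p (mem_head _ _).
    have [h [Ph c1 c2]] := combine f h' Pf Ph'.
    exists h; split => //; rewrite big_cons; apply: spanD.
      apply: spanM => //; first exact: (RM gd).
      by apply: span_gen; [exact: (R1 gd) | have [j Ej] := c1 i; exists j; rewrite Ej].
    exact: (Af_mono _ _ c2).
  have list_in : forall l : seq K, (forall y, y \in l -> B y) -> exists h, P h /\ forall y, y \in l -> Af h y.
    elim=> [|y l IH] Hl; first by exists 0; split.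
    have [h1 [P1 H1]] := B_in y (Hl y (mem_head _ _)).
    have [h2 [P2 H2]] := IH (fun z Hz => Hl z (ltac:(by rewrite in_cons Hz orbT))).
    have [h [Ph c1 c2]] := combine h1 h2 P1 P2.
    exists h; split => // z; rewrite in_cons => /orP [/eqP ->|Hz]; first exact: (Af_mono _ _ c1).
    exact: (Af_mono _ _ c2 _ (H2 z Hz)).
  have hsB : ideal_hs R Rg B by apply: (span_hs gd) => x [f [i [_ Hi]]]; split; [exact: (comp_R gd Hi) | exact: (comp_Rg Hi)].
  have nzB : exists y, B y /\ y != 0.
    by exists (lead_coef f0); split; [exact: inB | rewrite lead_coef_eq0; apply/eqP].
  have nst : ~ st B 1.
    move/st1P => [J [fgJ nzJ SJ JB]].
    have fgJ' := fgJ; case: fgJ' => l [Hl EJ].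
    have [h [Ph Hh]] := list_in l (fun y Hy => JB y (ltac:(rewrite EJ; apply: span_gen => //; exact: (R1 gd)))).
    have JA : psubset J (Af h) by rewrite EJ; apply: (span_min (Af_ideal gd h).2).
    have SA := star_full gd ss (ideal_nz (fg_ideal gd fgJ) nzJ) (Af_ideal gd h) JA SJ.
    apply: (PN h Ph); split => //; first exact: PR.
    apply/eqP => E; case: nzJ => y [Jy ny]; have := JA y Jy; rewrite E => /(Af0 gd) E'.
    by rewrite E' eqxx in ny.
  have [Q [HQ BQ]] := exists_hQMax_above gd ss hsB nzB nst.
  by exists Q; split => // f Pf i; apply: BQ; exact: inB.
have [Q HQ] := exQ; exists Q; split => // f /allz -> i; rewrite coef0.
by have [H _ _ _] := hQMax_props gd HQ; exact: (I0 H).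
Qed.

End Main.


Section FX.
Variable K : fieldType.
Lemma toFXD (f g : {poly K}) : toFX (f + g) = toFX f + toFX g. Proof. exact: tofracD. Qed.
Lemma toFXM (f g : {poly K}) : toFX (f * g) = toFX f * toFX g. Proof. exact: tofracM. Qed.
Lemma toFX1 : toFX (1 : {poly K}) = 1. Proof. exact: tofrac1. Qed.
Lemma toFX0 : toFX (0 : {poly K}) = 0. Proof. exact: tofrac0. Qed.
Lemma toFX_eq0 (f : {poly K}) : (toFX f == 0) = (f == 0). Proof. exact: tofrac_eq0. Qed.
Lemma toFX_inj (f g : {poly K}) : toFX f = toFX g -> f = g.
Proof. by move/eqP; rewrite /toFX tofrac_eq => /eqP. Qed.
Lemma toFX_sum (T : Type) (l : seq T) (F : T -> {poly K}) : toFX (\sum_(x <- l) F x) = \sum_(x <- l) toFX (F x).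
Proof. exact: rmorph_sum. Qed.
End FX.

Lemma frac_add (F : fieldType) (a b c d : F) : b != 0 -> d != 0 -> a / b + c / d = (a * d + c * b) / (b * d).
Proof. by move=> nb nd; field; apply/andP. Qed.
Lemma frac_mul (F : fieldType) (a b c d : F) : b != 0 -> d != 0 -> (a / b) * (c / d) = (a * c) / (b * d).
Proof. by move=> nb nd; field; apply/andP. Qed.

Lemma frac_lin (F : fieldType) (a b c f g : F) : b != 0 -> g != 0 ->
  a / b * c + f / g = (c * (a * g) + f * b) / (b * g).
Proof. by move=> nb ng; field; apply/andP. Qed.

Section NA.
Variables (G : zmodType) (K : fieldType) (Gam : G -> Prop) (R : K -> Prop) (Rg : G -> K -> Prop)
  (star : (K -> Prop) -> (K -> Prop)).
Hypothesis gd : graded_domain Gam R Rg.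
Hypothesis ss : semistar R star.
Hypothesis hRH : psubset (star R) (RH R Rg).
Hypothesis hneq : star R <> RH R Rg.

Local Notation st := (stilde R star).
Local Notation hQ := (hQMax R Rg st).
Local Notation N := (Nstar R Rg star).
Local Notation NA := (NA R Rg star).

Lemma N_nz g : N g -> toFX g != 0.
Proof. by case=> _ ng _; rewrite toFX_eq0. Qed.

Lemma NA_frac f g : polys R f -> N g -> NA (toFX f / toFX g).
Proof. by move=> Hf Hg; exists f, g. Qed.

Lemma NA_poly f : polys R f -> NA (toFX f).
Proof. by move=> Hf; exists f, 1; split => //; [exact: (N_1 gd ss hRH hneq) | rewrite toFX1 divr1]. Qed.

Lemma NA_add z1 z2 : NA z1 -> NA z2 -> NA (z1 + z2).
Proof.
move=> [f1 [g1 [R1' N1 ->]]] [f2 [g2 [R2' N2 ->]]].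
exists (f1 * g2 + f2 * g1), (g1 * g2); split.
- by apply: (polys_add gd); apply: (polys_mul gd) => //; [case: N2 | case: N1].
- exact: (N_mul gd ss hRH hneq).
- have n1 := N_nz N1; have n2 := N_nz N2.
  by rewrite toFXD !toFXM (@frac_add _ (toFX f1) (toFX g1) (toFX f2) (toFX g2) n1 n2).
Qed.

Lemma NA_mul z1 z2 : NA z1 -> NA z2 -> NA (z1 * z2).
Proof.
move=> [f1 [g1 [R1' N1 ->]]] [f2 [g2 [R2' N2 ->]]].
exists (f1 * f2), (g1 * g2); split.
- exact: (polys_mul gd).
- exact: (N_mul gd ss hRH hneq).
- have n1 := N_nz N1; have n2 := N_nz N2.
  by rewrite !toFXM (@frac_mul _ (toFX f1) (toFX g1) (toFX f2) (toFX g2) n1 n2).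
Qed.

Lemma NA_0 : NA 0. Proof. by rewrite -toFX0; apply: NA_poly => i; rewrite coef0; exact: (R0 gd). Qed.
Lemma NA_1 : NA 1. Proof. by rewrite -toFX1; apply: NA_poly => i; rewrite coef1; case: eqP => _; [exact: (R1 gd) | exact: (R0 gd)]. Qed.

Lemma NA_submod : is_submod NA NA.
Proof. split; [exact: NA_0 | exact: NA_add | move=> r x; exact: NA_mul]. Qed.

End NA.


Lemma frac_swap (F : fieldType) (a g c : F) : a / g * c = c * a / g.
Proof. by rewrite mulrAC [a * c]mulrC. Qed.

Section Ext.
Variables (G : zmodType) (K : fieldType) (Gam : G -> Prop) (R : K -> Prop) (Rg : G -> K -> Prop)
  (star : (K -> Prop) -> (K -> Prop)).
Hypothesis gd : graded_domain Gam R Rg.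
Hypothesis ss : semistar R star.
Hypothesis hRH : psubset (star R) (RH R Rg).
Hypothesis hneq : star R <> RH R Rg.

Local Notation st := (stilde R star).
Local Notation hQ := (hQMax R Rg st).
Local Notation N := (Nstar R Rg star).
Local Notation NA := (NA R Rg star).
Local Notation E := (ext_ideal NA).

Section PolysQ.
Variable Q : K -> Prop.
Hypothesis idQ : is_ideal R Q.
Lemma polysQ_R f : polys Q f -> polys R f. Proof. by move=> H i; exact: (I_R idQ (H i)). Qed.
Lemma polysQ_CM q h : Q q -> polys R h -> polys Q (q%:P * h).
Proof. by move=> Hq Hh i; rewrite coefCM mulrC; exact: (IM idQ (Hh i) Hq). Qed.
Lemma polysQ_M f h : polys Q f -> polys R h -> polys Q (f * h).
Proof.
move=> Hf Hh i; rewrite coefM; apply: (I_sum idQ) => k _ _; rewrite mulrC; exact: (IM idQ (Hh _) (Hf _)).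
Qed.
Lemma polysQ_add f h : polys Q f -> polys Q h -> polys Q (f + h).
Proof. by move=> Hf Hh i; rewrite coefD; exact: (ID idQ (Hf i) (Hh i)). Qed.
Lemma polysQ0 : polys Q 0. Proof. by move=> i; rewrite coef0; exact: (I0 idQ). Qed.
End PolysQ.

Lemma ext_frac Q z : is_ideal R Q -> E Q z -> exists f g, [/\ polys Q f, N g & z = toFX f / toFX g].
Proof.
move=> idQ [s [Hs Ez]]; subst z; elim: s Hs => [|p s IH] Hs.
  exists 0, 1; split; [exact: polysQ0 | exact: (N_1 gd ss hRH hneq) | by rewrite big_nil toFX0 mul0r].
have [f [g [Qf Ng Ef]]] := IH (fun q Hq => Hs q (ltac:(by rewrite in_cons Hq orbT))).
have [[fa [ga [Rfa Nga Ea]]] [q [Qq Eq]]] := Hs p (mem_head _ _).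
exists (q%:P * (fa * g) + f * ga), (ga * g); split.
- apply: (polysQ_add idQ); first apply: (polysQ_CM idQ Qq).
    by apply: (polys_mul gd) => //; case: Ng.
  by apply: (polysQ_M idQ Qf); case: Nga.
- exact: (N_mul gd ss hRH hneq).
- rewrite big_cons Ef Ea Eq (@frac_lin _ (toFX fa) (toFX ga) (toFX q%:P) (toFX f) (toFX g) (N_nz Nga) (N_nz Ng)).
  by rewrite toFXD !toFXM.
Qed.

Lemma frac_ext Q f g : polys Q f -> N g -> E Q (toFX f / toFX g).
Proof.
move=> Qf Ng.
exists [seq (toFX 'X^i / toFX g, toFX (f`_i)%:P) | i <- index_iota 0 (size f)]; split.
  move=> _ /mapP [i _ ->] /=; split; last by exists f`_i.
  exact: (NA_frac (polysXn gd i) Ng).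
rewrite big_map big_mkord.
have Hf : f = \sum_(i < size f) (f`_i)%:P * 'X^i.
  by rewrite -{1}(coefK f) poly_def; apply: eq_bigr => i _; rewrite mul_polyC.
have -> : toFX f / toFX g = toFX (\sum_(i < size f) (f`_i)%:P * 'X^i) / toFX g by rewrite -Hf.
rewrite toFX_sum mulr_suml; apply: eq_bigr => i _.
by rewrite toFXM (@frac_swap _ (toFX 'X^i) (toFX g) (toFX (f`_i)%:P)).
Qed.


Lemma E_ideal Q : is_ideal R Q -> is_ideal NA (E Q).
Proof.
move=> idQ; split; last exact: (span_submod _ (NA_mul gd ss hRH hneq)).
apply: (span_min (NA_submod gd ss hRH hneq)) => _ [q [Qq ->]].
by apply: (NA_poly gd ss hRH hneq); apply: (polysC gd); exact: (I_R idQ Qq).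
Qed.

Lemma E_proper Q : hQ Q -> ~ E Q 1.
Proof.
move=> HQ H1; have [idQ _ _ _] := hQMax_props gd HQ.
have [f [g [Qf Ng E1]]] := ext_frac idQ H1.
have Egf : toFX g = toFX f by have := congr1 (fun w => w * toFX g) E1; rewrite /= mul1r divfK ?(N_nz Ng).
have /toFX_inj Eg := Egf.
have := proj1 (N_char gd ss hRH hneq g) Ng; case=> _; apply; exists Q; split => //; by rewrite Eg.
Qed.

Lemma ideal_key I : is_ideal NA I -> ~ I 1 ->
  exists Q, hQ Q /\ forall f, polys R f -> I (toFX f) -> polys Q f.
Proof.
move=> idI nI1.
have [Q [HQ HP]] := key gd ss hRH hneq (P := fun f => polys R f /\ I (toFX f)) (fun f H => H.1)
  (ltac:(split; [move=> i; rewrite coef0; exact: (R0 gd) | rewrite toFX0; exact: (I0 idI)]))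
  (ltac:(move=> f g [Rf If] [Rg' Ig]; split; [exact: (polys_add gd) | rewrite toFXD; exact: (ID idI)]))
  (ltac:(move=> f [Rf If]; split; [exact: (polys_mul gd (polysX gd) Rf) | rewrite toFXM; apply: (IM idI) => //; exact: (NA_poly gd ss hRH hneq (polysX gd))]))
  (ltac:(move=> f [Rf If] Nf; apply: nI1; rewrite -(divfK (N_nz Nf) 1) -toFX1; apply: (IM idI) => //;
         apply: (NA_frac _ Nf); move=> i; rewrite coef1; case: eqP => _; [exact: (R1 gd) | exact: (R0 gd)])).
by exists Q; split => // f Rf If; apply: HP.
Qed.

Lemma sub_E I Q : is_ideal NA I -> (forall f, polys R f -> I (toFX f) -> polys Q f) -> psubset I (E Q).
Proof.
move=> idI HP z Iz.
have [f [g [Rf Ng Ez]]] := I_R idI Iz.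
apply: contrapT => nE; apply: nE; rewrite Ez; apply: (frac_ext _ Ng); apply: HP => //.
have -> : toFX f = toFX g * z by rewrite Ez mulrC divfK ?(N_nz Ng).
apply: (IM idI) => //; apply: (NA_poly gd ss hRH hneq); by case: Ng.
Qed.

Lemma max_ext Q : hQ Q -> is_maximal_ideal NA (E Q).
Proof.
move=> HQ; have [idQ _ _ _] := hQMax_props gd HQ.
split; [exact: E_ideal | exact: E_proper |].
move=> I idI nI1 EI.
have [Q' [HQ' HP]] := ideal_key idI nI1.
have QQ' : psubset Q Q'.
  move=> q Qq; have := HP q%:P (polysC gd (I_R idQ Qq)).
  have : I (toFX q%:P) by apply: EI; apply: span_gen; [exact: (NA_1 gd ss hRH hneq) | exists q].
  by move=> H /(_ H) /(_ 0%N); rewrite coefC eqxx.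
have EQ : Q' = Q by case: HQ => _ maxQ; apply: maxQ => //; case: HQ'.
rewrite EQ in HP.
apply: funext => z; apply: propext; split; [exact: (sub_E idI HP) | exact: EI].
Qed.

Lemma max_is_ext M : is_maximal_ideal NA M -> exists Q, hQ Q /\ M = E Q.
Proof.
move=> [idM nM1 maxM].
have [Q [HQ HP]] := ideal_key idM nM1.
exists Q; split => //.
have [idQ _ _ _] := hQMax_props gd HQ.
by apply: esym; apply: maxM; [exact: E_ideal | exact: E_proper | exact: (sub_E idM HP)].
Qed.

End Ext.


Lemma frac_cancel (F : fieldType) (s t a : F) : s != 0 -> s * t * (a / s) = t * a.
Proof. by move=> ns; field. Qed.
Lemma frac_cancel2 (F : fieldType) (a b c : F) : b != 0 -> a * b * (c / b) = a * c.
Proof. by move=> nb; field. Qed.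

Section Loc.
Variables (G : zmodType) (K : fieldType) (Gam : G -> Prop) (R : K -> Prop) (Rg : G -> K -> Prop)
  (star : (K -> Prop) -> (K -> Prop)).
Hypothesis gd : graded_domain Gam R Rg.
Hypothesis ss : semistar R star.
Hypothesis hRH : psubset (star R) (RH R Rg).
Hypothesis hneq : star R <> RH R Rg.

Local Notation st := (stilde R star).
Local Notation hQ := (hQMax R Rg st).
Local Notation N := (Nstar R Rg star).
Local Notation NA := (NA R Rg star).

Variable Q : K -> Prop.
Hypothesis HQ : hQ Q.

Lemma loc_R x : R x -> loc R Q x.
Proof.
move=> Rx; have [_ nQ1 _ _] := hQMax_props gd HQ.
by exists x, 1; split => //; [exact: (R1 gd) | rewrite divr1].
Qed.

Lemma nQ_nz s : ~ Q s -> s != 0.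
Proof.
move=> nQs; apply/eqP => E; apply: nQs; rewrite E.
by have [idQ _ _ _] := hQMax_props gd HQ; exact: (I0 idQ).
Qed.

Lemma loc_clear (l : seq K) : (forall x, x \in l -> loc R Q x) ->
  exists t, [/\ R t, ~ Q t & forall x, x \in l -> R (t * x)].
Proof.
elim: l => [|x l IH] Hl.
  have [_ nQ1 _ _] := hQMax_props gd HQ.
  by exists 1; split => //; exact: (R1 gd).
have [t [Rt nQt Ht]] := IH (fun y Hy => Hl y (ltac:(by rewrite in_cons Hy orbT))).
have [a [s [Ra Rs nQs ->]]] := Hl x (mem_head _ _).
exists (s * t); split.
- exact: (RM gd).
- by move=> H; case: (hQMax_prime gd ss HQ Rs Rt H).
- move=> y; rewrite in_cons => /orP [/eqP ->|Hy].
    by rewrite frac_cancel ?nQ_nz //; exact: (RM gd).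
  by rewrite -mulrA; apply: (RM gd) => //; exact: Ht.
Qed.

Lemma coefs_in (F : {poly K}) i : (i < size F)%N -> F`_i \in [seq F`_j | j <- iota 0 (size F)].
Proof. by move=> Hi; apply/mapP; exists i => //; rewrite mem_iota. Qed.

Lemma clear_poly t (F : {poly K}) : R t -> (forall i, (i < size F)%N -> R (t * F`_i)) -> polys R (t *: F).
Proof.
move=> Rt H i; rewrite coefZ; have [lt|ge] := ltnP i (size F); first exact: H.
by rewrite nth_default // mulr0; exact: (R0 gd).
Qed.

End Loc.

Section Three.
Variables (G : zmodType) (K : fieldType) (Gam : G -> Prop) (R : K -> Prop) (Rg : G -> K -> Prop)
  (star : (K -> Prop) -> (K -> Prop)).
Hypothesis gd : graded_domain Gam R Rg.
Hypothesis ss : semistar R star.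
Hypothesis hRH : psubset (star R) (RH R Rg).
Hypothesis hneq : star R <> RH R Rg.

Local Notation st := (stilde R star).
Local Notation hQ := (hQMax R Rg st).
Local Notation N := (Nstar R Rg star).
Local Notation NA := (NA R Rg star).

Lemma NA_nagata z : NA z -> forall Q, hQ Q -> nagata (loc R Q) z.
Proof.
move=> [f [g [Rf Ng ->]]] Q HQ.
have [Rg' _ _] := Ng.
have [i [nQgi _]] : exists i, ~ Q g`_i /\ forall k, (k < i)%N -> Q g`_k.
  apply: min_nonQ => Qg; have := proj1 (N_char gd ss hRH hneq g) Ng; case=> _; apply; by exists Q.
exists f, g; split => //.
- by move=> j; apply: (loc_R gd HQ).
- by move=> j; apply: (loc_R gd HQ).
- exists [:: ((g`_i)^-1, g`_i)]; split; last by rewrite big_seq1 mulVf ?(nQ_nz gd HQ).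
  move=> p; rewrite inE => /eqP -> /=; split; last by exists i.
  have [_ nQ1 _ _] := hQMax_props gd HQ.
  by exists 1, g`_i; split => //; [exact: (R1 gd) | rewrite div1r].
Qed.

Lemma nagata_NA z : (forall Q, hQ Q -> nagata (loc R Q) z) -> NA z.
Proof.
move=> Hz.
pose P := fun g => polys R g /\ exists f, polys R f /\ toFX g * z = toFX f.
have [[g [[Rg' [f [Rf Ef]]] Ng]]|none] := pselect (exists g, P g /\ N g).
  have nz := N_nz Ng; exists f, g; split => //; by rewrite -Ef (mulrC (toFX g) z) (mulfK nz).
have [Q [HQ HP]] := key gd ss hRH hneq (P := P) (fun g H => H.1)
  (ltac:(split; [move=> i; rewrite coef0; exact: (R0 gd) | exists 0; split; [move=> i; rewrite coef0; exact: (R0 gd) | by rewrite toFX0 mul0r]]))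
  (ltac:(move=> g1 g2 [R1' [f1 [Rf1 E1]]] [R2' [f2 [Rf2 E2]]]; split; [exact: (polys_add gd) | exists (f1 + f2); split; [exact: (polys_add gd) | by rewrite !toFXD mulrDl E1 E2]]))
  (ltac:(move=> g [R1' [f1 [Rf1 E1]]]; split; [exact: (polys_mul gd (polysX gd)) | exists ('X * f1); split; [exact: (polys_mul gd (polysX gd)) | by rewrite !toFXM -mulrA E1]]))
  (ltac:(move=> g Pg Ng; apply: none; by exists g)).
have [idQ _ _ _] := hQMax_props gd HQ.
have [F [D [LF LD [s [Hs E1]] Ez]]] := Hz Q HQ.
have nD : D != 0.
  apply/eqP => ED; move: E1; rewrite big_seq_cond big1 => [/eqP|p /andP [Hp _]]; first by rewrite oner_eq0.
  by have [_ [i ->]] := Hs p Hp; rewrite ED coef0 mulr0.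
pose l := [seq F`_j | j <- iota 0 (size F)] ++ [seq D`_j | j <- iota 0 (size D)] ++ map fst s.
have [t [Rt nQt Ht]] := loc_clear gd ss HQ (l := l)
  (ltac:(move=> x; rewrite !mem_cat => /orP [/mapP [j _ ->]|/orP [/mapP [j _ ->]|/mapP [p Hp ->]]]; [exact: LF | exact: LD | exact: (Hs p Hp).1])).
have RtF : polys R (t *: F) by apply: (clear_poly gd) => // j Hj; apply: Ht; rewrite mem_cat coefs_in.
have RtD : polys R (t *: D) by apply: (clear_poly gd) => // j Hj; apply: Ht; rewrite !mem_cat coefs_in ?orbT.
have PtD : P (t *: D).
  split => //; exists (t *: F); split => //.
  rewrite -!mul_polyC !toFXM Ez (@frac_cancel2 _ (toFX t%:P) (toFX D) (toFX F)) //.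
  by rewrite toFX_eq0.
have QtD := HP _ PtD.
have Qtt : Q (t * t).
  have -> : t * t = \sum_(p <- s) (t * p.1) * (t * p.2) by rewrite -[t * t]mulr1 E1 mulr_sumr; apply: eq_bigr => p _; ring.
  apply: (I_sum idQ) => p Hp _.
  have [_ [i Ei]] := Hs p Hp.
  apply: (IM idQ); first by apply: Ht; rewrite !mem_cat map_f ?orbT.
  by have := QtD i; rewrite coefZ Ei.
by case: (hQMax_prime gd ss HQ Rt Rt Qtt).
Qed.

End Three.


Theorem proposition2p3 (G : zmodType) (K : fieldType) (Gam : G -> Prop)
  (R : K -> Prop) (Rg : G -> K -> Prop) (star : (K -> Prop) -> (K -> Prop)) :
  graded_domain Gam R Rg ->
  semistar R star ->
  psubset (star R) (RH R Rg) -> star R <> RH R Rg ->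
  [/\ Nstar R Rg star =
        (fun f => polys R f /\
           ~ (exists Q, hQMax R Rg (stilde R star) Q /\ polys Q f)),
      (forall M, is_maximal_ideal (NA R Rg star) M <->
         exists Q, hQMax R Rg (stilde R star) Q /\ M = ext_ideal (NA R Rg star) Q) &
      NA R Rg star =
        (fun z => forall Q, hQMax R Rg (stilde R star) Q -> nagata (loc R Q) z)].
Proof.
move=> gd ss hRH hneq; split.
- apply: funext => f; apply: propext; exact: (N_char gd ss hRH hneq f).
- move=> M; split; first exact: (max_is_ext gd ss hRH hneq).
  by move=> [Q [HQ ->]]; exact: (max_ext gd ss hRH hneq HQ).
- apply: funext => z; apply: propext; split.
    exact: (NA_nagata gd ss hRH hneq).
  exact: (nagata_NA gd ss hRH hneq).
Qed.
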